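(* (i) For each $n$, $$\mathrm{Var}[\widetilde H_n]\ \ge\ \sum_{j=1}^{\lfloor 2h_n\rfloor} r_{j,n}(1-p_{j,n})\ \ge\ \sum_{j=1}^{\lfloor 2h_n\rfloor}\widetilde r_{j,n}(1-p_{j,n}),$$ where $\widetilde r_{j,n}=p_{j,n}+2\sum_{l=j+1}^{\lfloor 2h_n\rfloor}p_{l,n}$. (ii) If $\liminf_n \mathrm{Var}[\widetilde H_n]>0$, then as $n\to\infty$ $$\mathrm{Var}[\widetilde H_n]\sim \sum_{j=1}^{\lfloor 2h_n\rfloor}\widetilde r_{j,n}(1-p_{j,n}),$$ and, with $$V_n=\sum_{j=1}^{\lfloor 3\widehat H_n\rfloor}p_{j,n}(1-p_{j,n})+2\sum_{l=2}^{\lfloor 3\widehat H_n\rfloor}p_{l,n}\sum_{j=1}^{l-1}(1-p_{j,n}),$$ we have $V_n/\mathrm{Var}[\widetilde H_n]\to 1$ in probability.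
   Context: $X$ is a positive random variable with survival function $S(x)=P(X>x)$ satisfying $S(x)>0$ for all $x\ge0$. Write $S_-(x)=P(X\ge x)$. For each integer $n\ge1$, the theoretical $h$-index is $$h_n=\sup\{x\ge 0:\ nS_-(x)\ge x\}.$$ Let $X_1,\dots,X_n$ be independent copies of $X$, and write $$\widehat S_n(x)=\frac1n\sum_{i=1}^n\mathbf 1\{X_i>x\},\qquad \widehat S_{n-}(x)=\frac1n\sum_{i=1}^n\mathbf 1\{X_i\ge x\}.$$ The empirical $h$-index is $$\widehat H_n=\sup\{x\ge0:\ n\widehat S_{n-}(x)\ge x\},$$ and $$\widetilde H_n=\sum_{j=1}^n\mathbf 1\{\widehat S_n(j-1)\ge j/n\}.$$ For $1\le j\le n$, $$p_{j,n}=P\bigl(n\widehat S_n(j-1)\ge j\bigr)=\sum_{y=j}^n\binom ny S(j-1)^y\bigl(1-S(j-1)\bigr)^{n-y},$$ and $p_{j,n}=0$ for $j>n$. Finally, $$r_{j,n}=p_{j,n}+2\sum_{l=j+1}^n p_{l,n}.$$ The notation $a_n\sim b_n$ means $a_n/b_n\to1$. *)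

(* Defs.v *)
From Stdlib Require Import Reals Lra Lia Arith.
Open Scope R_scope.

Fixpoint sum1 (f : nat -> R) (m : nat) : R :=
  match m with O => 0 | S k => sum1 f k + f (S k) end.

(* sum_{l=a}^{b} f l  (for a >= 1; empty if a > b) *)
Definition sum_range (a b : nat) (f : nat -> R) : R :=
  sum1 (fun k => if Nat.leb a k then f k else 0) b.

Fixpoint prod_lt (f : nat -> R) (n : nat) : R :=
  match n with O => 1 | S k => prod_lt f k * f k end.

Fixpoint sum_lt (f : nat -> R) (n : nat) : R :=
  match n with O => 0 | S k => sum_lt f k + f k end.

(* floor of a real, as a natural number (negative values sent to 0) *)
Definition floorn (x : R) : nat := Z.to_nat (Int_part x).

Inductive borel : (R -> Prop) -> Prop :=
| borel_half (a : R) : borel (fun x => a < x)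
| borel_compl (B : R -> Prop) : borel B -> borel (fun x => ~ B x)
| borel_union (Bs : nat -> R -> Prop) :
    (forall k, borel (Bs k)) -> borel (fun x => exists k, Bs k x).

Definition prob_space (Omega : Type) (ev : (Omega -> Prop) -> Prop)
  (P : (Omega -> Prop) -> R) : Prop :=
  ev (fun _ => True) /\
  (forall A, ev A -> ev (fun w => ~ A w)) /\
  (forall A : nat -> Omega -> Prop, (forall k, ev (A k)) ->
      ev (fun w => exists k, A k w)) /\
  (forall A, ev A -> 0 <= P A) /\
  P (fun _ => True) = 1 /\
  (forall A : nat -> Omega -> Prop, (forall k, ev (A k)) ->
     (forall k l w, k <> l -> A k w -> A l w -> False) ->
     Un_cv (fun N => sum_f_R0 (fun k => P (A k)) N)
           (P (fun w => exists k, A k w))).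

Definition iid_seq (Omega : Type) (ev : (Omega -> Prop) -> Prop)
  (P : (Omega -> Prop) -> R) (X : nat -> Omega -> R) : Prop :=
  (forall i B, borel B -> ev (fun w => B (X i w))) /\
  (forall i B, borel B -> P (fun w => B (X i w)) = P (fun w => B (X 0%nat w))) /\
  (forall (n : nat) (B : nat -> R -> Prop), (forall i, borel (B i)) ->
     P (fun w => forall i, (i < n)%nat -> B i (X i w))
     = prod_lt (fun i => P (fun w => B i (X i w))) n).

Section Hindex.
Variables (Omega : Type) (P : (Omega -> Prop) -> R) (X : nat -> Omega -> R).

Definition Ssurv (x : R) : R := P (fun w => X 0%nat w > x).
Definition Sminus (x : R) : R := P (fun w => X 0%nat w >= x).

(* the set whose supremum is the theoretical h-index h_n *)
Definition hset (n : nat) (x : R) : Prop := 0 <= x /\ INR n * Sminus x >= x.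

(* empirical survival functions based on X_1..X_n (here X_0..X_{n-1}) *)
Definition Shat (n : nat) (w : Omega) (x : R) : R :=
  / INR n * sum_lt (fun i => if Rlt_dec x (X i w) then 1 else 0) n.
Definition Shatm (n : nat) (w : Omega) (x : R) : R :=
  / INR n * sum_lt (fun i => if Rle_dec x (X i w) then 1 else 0) n.

(* the set whose supremum is the empirical h-index \hat H_n(w) *)
Definition Hhatset (n : nat) (w : Omega) (x : R) : Prop :=
  0 <= x /\ INR n * Shatm n w x >= x.

Definition Htilde (n : nat) (w : Omega) : R :=
  sum1 (fun j => if Rle_dec (INR j / INR n) (Shat n w (INR j - 1)) then 1 else 0) n.

(* Variance of the simple (values in {0,...,n}) random variable \tilde H_n *)
Definition VarHtilde (n : nat) : R :=
  sum_f_R0 (fun k => INR k ^ 2 * P (fun w => Htilde n w = INR k)) n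
  - (sum_f_R0 (fun k => INR k * P (fun w => Htilde n w = INR k)) n) ^ 2.

Definition pjn (j n : nat) : R :=
  if Nat.leb j n then
    sum_range j n (fun y => C n y * Ssurv (INR j - 1) ^ y
                            * (1 - Ssurv (INR j - 1)) ^ (n - y))
  else 0.

Definition rjn (j n : nat) : R := pjn j n + 2 * sum_range (S j) n (fun l => pjn l n).

(* \tilde r_{j,n} with upper summation bound K = floor(2 h_n) *)
Definition rtjn (K j n : nat) : R := pjn j n + 2 * sum_range (S j) K (fun l => pjn l n).

(* V_n with M = floor(3 \hat H_n) *)
Definition Vn (M n : nat) : R :=
  sum1 (fun j => pjn j n * (1 - pjn j n)) M
  + 2 * sum_range 2 M (fun l => pjn l n * sum1 (fun j => 1 - pjn j n) (l - 1)).

End Hindex.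

Arguments Ssurv {Omega}. Arguments Sminus {Omega}. Arguments hset {Omega}.
Arguments Shat {Omega}. Arguments Shatm {Omega}. Arguments Hhatset {Omega}.
Arguments Htilde {Omega}. Arguments VarHtilde {Omega}. Arguments pjn {Omega}.
Arguments rjn {Omega}. Arguments rtjn {Omega}. Arguments Vn {Omega}.

(* Main.v *)
Require Import Defs.
From Stdlib Require Import Reals Lra Lia Arith ZArith FunctionalExtensionality PropExtensionality Classical.
Open Scope R_scope.

Lemma pred_ext {Omega : Type} (A B : Omega -> Prop) :
  (forall w, A w <-> B w) -> A = B.
Proof. intros H; extensionality w; apply propositional_extensionality; auto. Qed.


Lemma ps_ev_true {Omega} {ev} {P : (Omega -> Prop) -> R} :
  prob_space Omega ev P -> ev (fun _ => True).
Proof. intros H; apply H. Qed.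

Lemma ps_ev_compl {Omega} {ev} {P : (Omega -> Prop) -> R} :
  prob_space Omega ev P -> forall A, ev A -> ev (fun w => ~ A w).
Proof. intros H; apply H. Qed.

Lemma ps_ev_union {Omega} {ev} {P : (Omega -> Prop) -> R} :
  prob_space Omega ev P -> forall A : nat -> Omega -> Prop, (forall k, ev (A k)) ->
      ev (fun w => exists k, A k w).
Proof. intros H; apply H. Qed.

Lemma ps_ev_false {Omega} {ev} {P : (Omega -> Prop) -> R} :
  prob_space Omega ev P -> ev (fun _ : Omega => False).
Proof.
  intros H. replace (fun _ : Omega => False) with (fun w : Omega => ~ (fun _ : Omega => True) w).
  apply (ps_ev_compl H). apply (ps_ev_true H).
  apply pred_ext; intuition.
Qed.

Lemma ps_ev_or {Omega} {ev} {P : (Omega -> Prop) -> R} :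
  prob_space Omega ev P -> forall A B, ev A -> ev B -> ev (fun w => A w \/ B w).
Proof.
  intros H A B HA HB.
  replace (fun w => A w \/ B w) with (fun w => exists k, (match k with O => A | S O => B | _ => fun _ => False end) w).
  apply (ps_ev_union H). intros [|[|k]]; auto. apply (ps_ev_false H).
  apply pred_ext; intros w; split.
  - intros [[|[|k]] Hk]; auto. destruct Hk.
  - intros [Ha|Hb]; [exists O|exists (S O)]; auto.
Qed.

Lemma ps_ev_and {Omega} {ev} {P : (Omega -> Prop) -> R} :
  prob_space Omega ev P -> forall A B, ev A -> ev B -> ev (fun w => A w /\ B w).
Proof.
  intros H A B HA HB.
  replace (fun w => A w /\ B w) with (fun w => ~ (fun w => (fun w => ~ A w) w \/ (fun w => ~ B w) w) w).
  apply (ps_ev_compl H). apply (ps_ev_or H); apply (ps_ev_compl H); auto.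
  apply pred_ext; intros w; split.
  - intros Hn. apply NNPP. intros Hc. apply Hn. apply not_and_or in Hc. auto.
  - intros [Ha Hb] [Hc|Hc]; auto.
Qed.

Lemma ps_ev_const {Omega} {ev} {P : (Omega -> Prop) -> R} :
  prob_space Omega ev P -> forall A (Q : Prop), ev A -> ev (fun w => A w /\ Q).
Proof.
  intros H A Q HA. destruct (classic Q) as [q|q].
  - replace (fun w => A w /\ Q) with A; auto. apply pred_ext; intuition.
  - replace (fun w => A w /\ Q) with (fun _ : Omega => False). apply (ps_ev_false H).
    apply pred_ext; intuition.
Qed.

Lemma ps_P_false {Omega} {ev} {P : (Omega -> Prop) -> R} :
  prob_space Omega ev P -> P (fun _ => False) = 0.
Proof.
  intros H. destruct H as (H1 & H2 & H3 & H4 & H5 & H6).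
  assert (Hc := H6 (fun _ _ => False) (fun _ => ps_ev_false (conj H1 (conj H2 (conj H3 (conj H4 (conj H5 H6)))))) ).
  assert (E : (fun w : Omega => exists _ : nat, False) = (fun _ => False)).
  { apply pred_ext; intros w; split; [intros [_ []]| intros []]. }
  cbv beta in Hc. rewrite E in Hc. clear E. specialize (Hc (fun _ _ _ _ f _ => f)).
  set (p := P (fun _ => False)) in *.
  assert (Hs : forall N, sum_f_R0 (fun _ : nat => p) N = INR (S N) * p).
  { induction N; simpl sum_f_R0. simpl; ring. rewrite IHN. rewrite (S_INR (S N)). ring. }
  assert (Hc2 : Un_cv (fun N => sum_f_R0 (fun _ : nat => p) (S N)) p).
  { intros e He. destruct (Hc e He) as [N HN]. exists N. intros n Hn. apply HN. lia. }
  assert (Hd := CV_minus _ _ _ _ Hc2 Hc).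
  assert (Hk : Un_cv (fun n => sum_f_R0 (fun _ : nat => p) (S n) - sum_f_R0 (fun _ : nat => p) n) p).
  { intros e He. exists O. intros n _. rewrite !Hs. rewrite (S_INR (S n)). unfold R_dist.
    replace ((INR (S n) + 1) * p - INR (S n) * p - p) with 0 by ring. rewrite Rabs_R0; auto. }
  assert (U := UL_sequence _ _ _ Hk Hd). lra.
Qed.

Lemma ps_P_or {Omega} {ev} {P : (Omega -> Prop) -> R} :
  prob_space Omega ev P -> forall A B, ev A -> ev B -> (forall w, A w -> B w -> False) ->
  P (fun w => A w \/ B w) = P A + P B.
Proof.
  intros H A B HA HB Hd.
  set (F := fun k : nat => match k with O => A | S O => B | _ => fun _ : Omega => False end).
  assert (Hc := proj2 (proj2 (proj2 (proj2 (proj2 H)))) F).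
  assert (E : (fun w => exists k, F k w) = (fun w => A w \/ B w)).
  { apply pred_ext; intros w; split.
    - intros [[|[|k]] Hk]; simpl in Hk; auto. destruct Hk.
    - intros [Ha|Hb]; [exists O|exists (S O)]; auto. }
  rewrite E in Hc. clear E.
  assert (Hc' : Un_cv (fun N : nat => sum_f_R0 (fun k : nat => P (F k)) N) (P (fun w : Omega => A w \/ B w))).
  { apply Hc. intros [|[|k]]; simpl; auto. apply (ps_ev_false H).
    intros [|[|k]] [|[|l]] w Hkl; simpl; intuition eauto. }
  assert (Hk : Un_cv (fun N : nat => sum_f_R0 (fun k : nat => P (F k)) N) (P A + P B)).
  { intros e He. exists 1%nat. intros n Hn. unfold R_dist.
    assert (Hs : forall m, sum_f_R0 (fun k : nat => P (F k)) (S m) = P A + P B).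
    { induction m. simpl. reflexivity. rewrite tech5, IHm. simpl. rewrite (ps_P_false H). ring. }
    destruct n. lia. rewrite Hs. replace (P A + P B - (P A + P B)) with 0 by ring. rewrite Rabs_R0; auto. }
  exact (UL_sequence _ _ _ Hc' Hk).
Qed.

Lemma ps_P_ge0 {Omega} {ev} {P : (Omega -> Prop) -> R} :
  prob_space Omega ev P -> forall A, ev A -> 0 <= P A.
Proof. intros H; apply H. Qed.

Lemma ps_P_true {Omega} {ev} {P : (Omega -> Prop) -> R} :
  prob_space Omega ev P -> P (fun _ => True) = 1.
Proof. intros H; apply H. Qed.

Lemma ps_P_compl {Omega} {ev} {P : (Omega -> Prop) -> R} :
  prob_space Omega ev P -> forall A, ev A -> P (fun w => ~ A w) = 1 - P A.
Proof.
  intros H A HA.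
  assert (E := ps_P_or H A (fun w => ~ A w) HA (ps_ev_compl H A HA) (fun w a na => na a)).
  assert (Q : (fun w => A w \/ ~ A w) = (fun _ : Omega => True)).
  { apply pred_ext; intros w; split; auto. intros _; apply classic. }
  cbv beta in E. rewrite Q, (ps_P_true H) in E. lra.
Qed.

Lemma ps_P_mono {Omega} {ev} {P : (Omega -> Prop) -> R} :
  prob_space Omega ev P -> forall A B, ev A -> ev B -> (forall w, A w -> B w) -> P A <= P B.
Proof.
  intros H A B HA HB Hi.
  assert (E := ps_P_or H A (fun w => B w /\ ~ A w) HA (ps_ev_and H _ _ HB (ps_ev_compl H _ HA))
     (fun w a b => proj2 b a)). cbv beta in E.
  replace (fun w => A w \/ (B w /\ ~ A w)) with B in E.
  rewrite E. assert (0 <= P (fun w => B w /\ ~ A w)). apply (ps_P_ge0 H). apply (ps_ev_and H _ _ HB (ps_ev_compl H _ HA)). lra.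
  apply pred_ext; intros w; split.
  - intros b. destruct (classic (A w)); auto.
  - intros [a|[b _]]; auto.
Qed.

Lemma ps_P_le1 {Omega} {ev} {P : (Omega -> Prop) -> R} :
  prob_space Omega ev P -> forall A, ev A -> P A <= 1.
Proof.
  intros H A HA. rewrite <- (ps_P_true H). apply (ps_P_mono H); auto. apply (ps_ev_true H).
Qed.

Lemma ps_P_diff {Omega} {ev} {P : (Omega -> Prop) -> R} :
  prob_space Omega ev P -> forall A B, ev A -> ev B -> (forall w, B w -> A w) ->
  P (fun w => A w /\ ~ B w) = P A - P B.
Proof.
  intros H A B HA HB Hi.
  assert (E := ps_P_or H B (fun w => A w /\ ~ B w) HB (ps_ev_and H _ _ HA (ps_ev_compl H _ HB))
     (fun w a b => proj2 b a)). cbv beta in E.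
  replace (fun w => B w \/ (A w /\ ~ B w)) with A in E. lra.
  apply pred_ext; intros w; split.
  - intros b. destruct (classic (B w)); auto.
  - intros [a|[b _]]; auto.
Qed.

Definition bin (n k : nat) (q : R) : R :=
  if Nat.leb k n then C n k * q ^ k * (1 - q) ^ (n - k) else 0.

Lemma C_n_0 n : C n 0 = 1.
Proof. unfold C. rewrite Nat.sub_0_r. simpl. field. apply INR_fact_neq_0. Qed.

Lemma C_n_n n : C n n = 1.
Proof. unfold C. rewrite Nat.sub_diag. simpl. field. apply INR_fact_neq_0. Qed.

Lemma bin_step0 n q : bin (S n) 0 q = bin n 0 q * (1 - q).
Proof. unfold bin. simpl Nat.leb. cbv iota. rewrite !C_n_0, !Nat.sub_0_r. simpl. ring. Qed.

Lemma bin_step n k q : bin (S n) (S k) q = bin n k q * q + bin n (S k) q * (1 - q).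
Proof.
  unfold bin. destruct (lt_eq_lt_dec k n) as [[Hlt|Heq]|Hgt].
  - replace (Nat.leb (S k) (S n)) with true by (symmetry; apply Nat.leb_le; lia).
    replace (Nat.leb k n) with true by (symmetry; apply Nat.leb_le; lia).
    replace (Nat.leb (S k) n) with true by (symmetry; apply Nat.leb_le; lia).
    rewrite <- (pascal n k Hlt).
    replace (S n - S k)%nat with (n - k)%nat by lia.
    replace (n - k)%nat with (S (n - S k)) by lia. simpl. ring.
  - subst k. replace (Nat.leb (S n) (S n)) with true by (symmetry; apply Nat.leb_le; lia).
    replace (Nat.leb n n) with true by (symmetry; apply Nat.leb_le; lia).
    replace (Nat.leb (S n) n) with false by (symmetry; apply Nat.leb_gt; lia).
    rewrite !Nat.sub_diag, !C_n_n. simpl. ring.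
  - replace (Nat.leb (S k) (S n)) with false by (symmetry; apply Nat.leb_gt; lia).
    replace (Nat.leb k n) with false by (symmetry; apply Nat.leb_gt; lia).
    replace (Nat.leb (S k) n) with false by (symmetry; apply Nat.leb_gt; lia). ring.
Qed.

Fixpoint cnt {Omega} (b : R -> bool) (X : nat -> Omega -> R) (w : Omega) (n : nat) : nat :=
  match n with O => O | S m => (cnt b X w m + if b (X m w) then 1 else 0)%nat end.

Lemma cnt_le {Omega} b (X : nat -> Omega -> R) w n : (cnt b X w n <= n)%nat.
Proof. induction n; simpl; auto. destruct (b (X n w)); lia. Qed.

Lemma prod_lt_shift f m : prod_lt f (S m) = f O * prod_lt (fun t => f (S t)) m.
Proof.
  induction m. simpl. ring.
  change (prod_lt f (S (S m))) with (prod_lt f (S m) * f (S m)). rewrite IHm. simpl. ring.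
Qed.

Lemma prod_lt_ext f g m : (forall t, (t < m)%nat -> f t = g t) -> prod_lt f m = prod_lt g m.
Proof.
  induction m; intros H; simpl; auto. rewrite IHm by (intros; apply H; lia). rewrite H by lia. auto.
Qed.

Lemma iid_ev {Omega ev P} (X : nat -> Omega -> R) :
  iid_seq Omega ev P X -> forall i B, borel B -> ev (fun w => B (X i w)).
Proof. intros H; apply H. Qed.

Lemma iid_id {Omega ev P} (X : nat -> Omega -> R) :
  iid_seq Omega ev P X -> forall i B, borel B -> P (fun w => B (X i w)) = P (fun w => B (X 0%nat w)).
Proof. intros H; apply H. Qed.

Lemma ev_cnt {Omega ev P} (X : nat -> Omega -> R) b :
  prob_space Omega ev P -> iid_seq Omega ev P X -> borel (fun x => b x = true) ->
  forall n k, ev (fun w => cnt b X w n = k).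
Proof.
  intros HP HI Hb n. induction n; intros k; simpl.
  - replace (fun _ : Omega => 0%nat = k) with (fun w : Omega => True /\ 0%nat = k).
    apply (ps_ev_const HP). apply (ps_ev_true HP). apply pred_ext; intuition.
  - replace (fun w => (cnt b X w n + (if b (X n w) then 1 else 0))%nat = k) with
      (fun w => (cnt b X w n = k /\ ~ b (X n w) = true) \/ ((cnt b X w n = pred k /\ b (X n w) = true) /\ (1 <= k)%nat)).
    + apply (ps_ev_or HP). apply (ps_ev_and HP); auto. apply (ps_ev_compl HP). apply (iid_ev X HI _ _ Hb).
      apply (ps_ev_const HP). apply (ps_ev_and HP); auto. apply (iid_ev X HI _ _ Hb).
    + apply pred_ext; intros w. destruct (b (X n w)); split; intuition; try lia; try discriminate.
Qed.

Lemma ev_tail {Omega ev P} (X : nat -> Omega -> R) :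
  prob_space Omega ev P -> iid_seq Omega ev P X ->
  forall (Cs : nat -> R -> Prop), (forall i, borel (Cs i)) -> forall n m,
  ev (fun w => forall t, (t < m)%nat -> Cs (n + t)%nat (X (n + t)%nat w)).
Proof.
  intros HP HI Cs HC n m. induction m.
  - replace (fun w : Omega => forall t : nat, (t < 0)%nat -> Cs (n + t)%nat (X (n + t)%nat w)) with (fun _ : Omega => True).
    apply (ps_ev_true HP). apply pred_ext; intros w; split; auto; intros; lia.
  - replace (fun w : Omega => forall t : nat, (t < S m)%nat -> Cs (n + t)%nat (X (n + t)%nat w)) with
     (fun w => (forall t : nat, (t < m)%nat -> Cs (n + t)%nat (X (n + t)%nat w)) /\ Cs (n + m)%nat (X (n+m)%nat w)).
    apply (ps_ev_and HP); auto. apply (iid_ev X HI); auto.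
    apply pred_ext; intros w; split.
    + intros [H1 H2] t Ht. destruct (Nat.eq_dec t m). subst; auto. apply H1; lia.
    + intros H; split; auto.
Qed.

Lemma tail_split {Omega} (X : nat -> Omega -> R) (Cs : nat -> R -> Prop) n m w :
  (forall t, (t < S m)%nat -> Cs (n + t)%nat (X (n + t)%nat w)) <->
  Cs n (X n w) /\ (forall t, (t < m)%nat -> Cs (S n + t)%nat (X (S n + t)%nat w)).
Proof.
  split.
  - intros H. split. specialize (H O ltac:(lia)). rewrite Nat.add_0_r in H. auto.
    intros t Ht. specialize (H (S t) ltac:(lia)). rewrite Nat.add_succ_r in H. simpl. auto.
  - intros [H0 H] t Ht. destruct t. rewrite Nat.add_0_r. auto.
    rewrite Nat.add_succ_r. apply (H t). lia.
Qed.

Lemma binom_tail {Omega ev P} (X : nat -> Omega -> R) b :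
  prob_space Omega ev P -> iid_seq Omega ev P X -> borel (fun x => b x = true) ->
  forall n k m (Cs : nat -> R -> Prop), (forall i, borel (Cs i)) ->
  P (fun w => cnt b X w n = k /\ forall t, (t < m)%nat -> Cs (n + t)%nat (X (n + t)%nat w))
  = bin n k (P (fun w => b (X 0%nat w) = true)) *
    prod_lt (fun t => P (fun w => Cs (n + t)%nat (X (n + t)%nat w))) m.
Proof.
  intros HP HI Hb n. set (q := P (fun w => b (X 0%nat w) = true)).
  assert (Hq1 : forall i, P (fun w => b (X i w) = true) = q).
  { intros i. apply (iid_id X HI i _ Hb). }
  assert (Hq0 : forall i, P (fun w => ~ b (X i w) = true) = 1 - q).
  { intros i. rewrite (ps_P_compl HP). rewrite Hq1. auto. apply (iid_ev X HI _ _ Hb). }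
  induction n; intros k m Cs HC.
  - simpl cnt. destruct k.
    + replace (fun w : Omega => 0%nat = 0%nat /\ (forall t : nat, (t < m)%nat -> Cs (0 + t)%nat (X (0 + t)%nat w)))
        with (fun w : Omega => forall t : nat, (t < m)%nat -> Cs t (X t w)).
      rewrite (proj2 (proj2 HI) m Cs HC). unfold bin. simpl. rewrite C_n_0. ring.
      apply pred_ext; intros w; simpl; intuition.
    + replace (fun w : Omega => 0%nat = S k /\ (forall t : nat, (t < m)%nat -> Cs (0 + t)%nat (X (0 + t)%nat w)))
        with (fun _ : Omega => False).
      rewrite (ps_P_false HP). unfold bin. simpl. ring.
      apply pred_ext; intros w; split; [intros []|intros [H _]; discriminate].
  - set (Cs1 := fun i => if Nat.eqb i n then (fun x => b x = true) else Cs i).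
    set (Cs0 := fun i => if Nat.eqb i n then (fun x => ~ b x = true) else Cs i).
    assert (HC1 : forall i, borel (Cs1 i)). { intros i; unfold Cs1; destruct (Nat.eqb i n); auto. }
    assert (HC0 : forall i, borel (Cs0 i)). { intros i; unfold Cs0; destruct (Nat.eqb i n); auto. apply borel_compl; auto. }
    assert (E1 : forall k', P (fun w => cnt b X w n = k' /\ b (X n w) = true /\
                   (forall t, (t < m)%nat -> Cs (S n + t)%nat (X (S n + t)%nat w)))
              = bin n k' q * q * prod_lt (fun t => P (fun w => Cs (S n + t)%nat (X (S n + t)%nat w))) m).
    { intros k'.
      replace (fun w => cnt b X w n = k' /\ b (X n w) = true /\
                   (forall t, (t < m)%nat -> Cs (S n + t)%nat (X (S n + t)%nat w)))
        with (fun w => cnt b X w n = k' /\ forall t, (t < S m)%nat -> Cs1 (n + t)%nat (X (n + t)%nat w)).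
      rewrite (IHn k' (S m) Cs1 HC1). rewrite prod_lt_shift. rewrite Nat.add_0_r.
      replace (P (fun w => Cs1 n (X n w))) with q by (rewrite <- (Hq1 n); unfold Cs1; rewrite Nat.eqb_refl; reflexivity).
      rewrite Rmult_assoc. f_equal. f_equal.
      apply prod_lt_ext. intros t _. rewrite Nat.add_succ_r. unfold Cs1.
      replace (Nat.eqb (S (n + t)) n) with false by (symmetry; apply Nat.eqb_neq; lia). reflexivity.
      apply pred_ext; intros w. rewrite tail_split. unfold Cs1. rewrite Nat.eqb_refl.
      split; intros (H1 & H2 & H3); repeat split; auto; intros t Ht; specialize (H3 t Ht);
        replace (Nat.eqb (S n + t) n) with false in * by (symmetry; apply Nat.eqb_neq; lia); auto. }
    assert (E0 : forall k', P (fun w => cnt b X w n = k' /\ ~ b (X n w) = true /\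
                   (forall t, (t < m)%nat -> Cs (S n + t)%nat (X (S n + t)%nat w)))
              = bin n k' q * (1 - q) * prod_lt (fun t => P (fun w => Cs (S n + t)%nat (X (S n + t)%nat w))) m).
    { intros k'.
      replace (fun w => cnt b X w n = k' /\ ~ b (X n w) = true /\
                   (forall t, (t < m)%nat -> Cs (S n + t)%nat (X (S n + t)%nat w)))
        with (fun w => cnt b X w n = k' /\ forall t, (t < S m)%nat -> Cs0 (n + t)%nat (X (n + t)%nat w)).
      rewrite (IHn k' (S m) Cs0 HC0). rewrite prod_lt_shift. rewrite Nat.add_0_r.
      replace (P (fun w => Cs0 n (X n w))) with (1 - q) by (rewrite <- (Hq0 n); unfold Cs0; rewrite Nat.eqb_refl; reflexivity).
      rewrite Rmult_assoc. f_equal. f_equal.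
      apply prod_lt_ext. intros t _. rewrite Nat.add_succ_r. unfold Cs0.
      replace (Nat.eqb (S (n + t)) n) with false by (symmetry; apply Nat.eqb_neq; lia). reflexivity.
      apply pred_ext; intros w. rewrite tail_split. unfold Cs0. rewrite Nat.eqb_refl.
      split; intros (H1 & H2 & H3); repeat split; auto; intros t Ht; specialize (H3 t Ht);
        replace (Nat.eqb (S n + t) n) with false in * by (symmetry; apply Nat.eqb_neq; lia); auto. }
    assert (Hev : forall k' (B : R -> Prop), borel B -> ev (fun w => cnt b X w n = k' /\ B (X n w) /\
                   (forall t, (t < m)%nat -> Cs (S n + t)%nat (X (S n + t)%nat w)))).
    { intros k' B HB. apply (ps_ev_and HP). apply (ev_cnt X b HP HI Hb). apply (ps_ev_and HP).
      apply (iid_ev X HI _ _ HB). apply (ev_tail X HP HI Cs HC (S n) m). }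
    simpl cnt. destruct k.
    + rewrite bin_step0. rewrite <- E0.
      apply f_equal. apply pred_ext; intros w. destruct (b (X n w)) eqn:E; split.
      * intros [H T]. lia.
      * intros [_ [F _]]. exfalso; auto.
      * intros [H T]. split; [lia|split; [discriminate|exact T]].
      * intros [H [_ T]]. split; auto; lia.
    + rewrite bin_step.
      rewrite Rmult_plus_distr_r, <- E1, <- E0.
      rewrite <- (ps_P_or HP). apply f_equal. apply pred_ext; intros w.
      destruct (b (X n w)) eqn:E; split.
      * intros [H T]. left. split; [lia|split; [reflexivity|exact T]].
      * intros [[H [_ T]]|[H [F _]]]. split; auto; lia. exfalso; auto.
      * intros [H T]. right. split; [lia|split; [discriminate|exact T]].
      * intros [[H [F _]]|[H [_ T]]]. discriminate. split; auto; lia.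
      * apply (Hev _ (fun x => b x = true)). auto.
      * apply (Hev _ (fun x => ~ b x = true)). apply borel_compl; auto.
      * intros w [_ [H1 _]] [_ [H2 _]]; auto.
Qed.

Lemma ev_cnt_pred {Omega ev P} (X : nat -> Omega -> R) b :
  prob_space Omega ev P -> iid_seq Omega ev P X -> borel (fun x => b x = true) ->
  forall n (Q : nat -> Prop), ev (fun w => Q (cnt b X w n)).
Proof.
  intros HP HI Hb n Q.
  replace (fun w => Q (cnt b X w n)) with (fun w => exists k, (fun k w => cnt b X w n = k /\ Q k) k w).
  apply (ps_ev_union HP). intros k. apply (ps_ev_const HP). apply (ev_cnt X b HP HI Hb).
  apply pred_ext; intros w; split. intros [k [E Hk]]; subst; auto. intros H; exists (cnt b X w n); auto.
Qed.

Lemma borel_true : borel (fun _ => True).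
Proof.
  replace (fun _ : R => True) with (fun x => exists k : nat, (fun k => match k with O => fun x => 0 < x | S _ => fun x => ~ (0 < x) end) k x).
  apply borel_union. intros [|k]. apply borel_half. apply borel_compl, borel_half.
  apply pred_ext; intros x; split; auto. intros _. destruct (classic (0 < x)). exists O; auto. exists (S O); auto.
Qed.

Lemma binom_eq {Omega ev P} (X : nat -> Omega -> R) b :
  prob_space Omega ev P -> iid_seq Omega ev P X -> borel (fun x => b x = true) ->
  forall n k, P (fun w => cnt b X w n = k) = bin n k (P (fun w => b (X 0%nat w) = true)).
Proof.
  intros HP HI Hb n k.
  assert (H := binom_tail X b HP HI Hb n k 0 (fun _ _ => True) (fun _ => borel_true)).
  simpl prod_lt in H. rewrite Rmult_1_r in H. rewrite <- H.
  - apply f_equal. apply pred_ext; intros w; split; auto. intros [E _]; auto.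
Qed.

Lemma binom_sel {Omega ev P} (X : nat -> Omega -> R) b :
  prob_space Omega ev P -> iid_seq Omega ev P X -> borel (fun x => b x = true) ->
  forall (phi : nat -> bool) n M,
  P (fun w => (cnt b X w n <= M)%nat /\ phi (cnt b X w n) = true)
  = sum_f_R0 (fun k => if phi k then bin n k (P (fun w => b (X 0%nat w) = true)) else 0) M.
Proof.
  intros HP HI Hb phi n M.
  assert (Hk : forall k, P (fun w => cnt b X w n = k /\ phi k = true) =
     (if phi k then bin n k (P (fun w => b (X 0%nat w) = true)) else 0)).
  { intros k. destruct (phi k).
    - rewrite <- (binom_eq X b HP HI Hb). apply f_equal, pred_ext; intuition.
    - rewrite <- (ps_P_false HP). apply f_equal, pred_ext; intuition; discriminate. }
  induction M.
  - simpl. rewrite <- Hk. apply f_equal, pred_ext; intros w; split.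
    intros [H1 H2]. assert (cnt b X w n = 0%nat) by lia. rewrite H in *; auto.
    intros [H1 H2]. rewrite H1; auto.
  - rewrite tech5. rewrite <- IHM, <- Hk. rewrite <- (ps_P_or HP).
    + apply f_equal, pred_ext; intros w; split.
      * intros [H1 H2]. destruct (Nat.eq_dec (cnt b X w n) (S M)). right. rewrite <- e; auto.
        left. split; auto. lia.
      * intros [[H1 H2]|[H1 H2]]. split; auto. rewrite H1; split; auto.
    + apply (ev_cnt_pred X b HP HI Hb n (fun c => (c <= M)%nat /\ phi c = true)).
    + apply (ps_ev_const HP). apply (ev_cnt X b HP HI Hb).
    + intros w [H1 _] [H2 _]. lia.
Qed.

Lemma binom_sel_all {Omega ev P} (X : nat -> Omega -> R) b :
  prob_space Omega ev P -> iid_seq Omega ev P X -> borel (fun x => b x = true) ->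
  forall (phi : nat -> bool) n,
  P (fun w => phi (cnt b X w n) = true)
  = sum_f_R0 (fun k => if phi k then bin n k (P (fun w => b (X 0%nat w) = true)) else 0) n.
Proof.
  intros HP HI Hb phi n. rewrite <- (binom_sel X b HP HI Hb). apply f_equal, pred_ext; intros w; split.
  intros H; split; auto. apply cnt_le. intros [_ H]; auto.
Qed.

Lemma sum1_ext f g M : (forall j, (1 <= j <= M)%nat -> f j = g j) -> sum1 f M = sum1 g M.
Proof. induction M; intros H; simpl; auto. rewrite IHM by (intros; apply H; lia). rewrite H by lia. auto. Qed.

Lemma sum1_plus f g M : sum1 (fun j => f j + g j) M = sum1 f M + sum1 g M.
Proof. induction M; simpl; [ring|rewrite IHM; ring]. Qed.

Lemma sum1_minus f g M : sum1 (fun j => f j - g j) M = sum1 f M - sum1 g M.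
Proof. induction M; simpl; [ring|rewrite IHM; ring]. Qed.

Lemma sum1_scal c f M : sum1 (fun j => c * f j) M = c * sum1 f M.
Proof. induction M; simpl; [ring|rewrite IHM; ring]. Qed.

Lemma sum1_const c M : sum1 (fun _ => c) M = INR M * c.
Proof. induction M; simpl sum1. simpl; ring. rewrite IHM, S_INR. ring. Qed.

Lemma sum1_nonneg f M : (forall j, (1 <= j <= M)%nat -> 0 <= f j) -> 0 <= sum1 f M.
Proof. induction M; intros H; simpl. lra. assert (0 <= f (S M)) by (apply H; lia).
  assert (0 <= sum1 f M) by (apply IHM; intros; apply H; lia). lra. Qed.

Lemma sum1_le f g M : (forall j, (1 <= j <= M)%nat -> f j <= g j) -> sum1 f M <= sum1 g M.
Proof. induction M; intros H; simpl. lra. assert (f (S M) <= g (S M)) by (apply H; lia).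
  assert (sum1 f M <= sum1 g M) by (apply IHM; intros; apply H; lia). lra. Qed.

Lemma sum1_mono_idx f a b : (forall j, (1 <= j)%nat -> 0 <= f j) -> (a <= b)%nat -> sum1 f a <= sum1 f b.
Proof. intros H Hab. induction Hab. lra. simpl. specialize (H (S m) ltac:(lia)). lra. Qed.

Lemma sum1_zero_beyond f n K : (forall j, (n < j)%nat -> f j = 0) -> (n <= K)%nat -> sum1 f K = sum1 f n.
Proof. intros H Hk. induction Hk as [|m Hm IH]. auto. simpl. rewrite IH. rewrite (H (S m)). ring. lia. Qed.

Lemma sum1_le_beyond f n K : (forall j, (1 <= j)%nat -> 0 <= f j) -> (forall j, (n < j)%nat -> f j = 0) -> sum1 f K <= sum1 f n.
Proof. intros H0 H. destruct (le_lt_dec K n). apply sum1_mono_idx; auto.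
  rewrite (sum1_zero_beyond f n K); auto. lra. lia. Qed.

Lemma sum_f_R0_sum1 f n : sum_f_R0 f n = f O + sum1 f n.
Proof. induction n; simpl; [ring|rewrite IHn; ring]. Qed.

Lemma sum_range_S a b f : sum_range a (S b) f = sum_range a b f + (if Nat.leb a (S b) then f (S b) else 0).
Proof. reflexivity. Qed.

Lemma sum_range_empty a b f : (b < a)%nat -> sum_range a b f = 0.
Proof. intros H. unfold sum_range. induction b; simpl. auto. rewrite IHb by lia.
  replace (Nat.leb a (S b)) with false by (symmetry; apply Nat.leb_gt; lia). ring. Qed.

Definition G (q : nat -> R) (M : nat) : R :=
  sum1 (fun j => q j * (1 - q j)) M + 2 * sum_range 2 M (fun l => q l * sum1 (fun j => 1 - q j) (l - 1)).

Lemma G_step q M : G q (S M) = G q M + q (S M) * (1 - q (S M)) + 2 * (q (S M) * sum1 (fun j => 1 - q j) M).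
Proof.
  unfold G. rewrite sum_range_S. simpl sum1 at 1. replace (S M - 1)%nat with M by lia.
  destruct M. simpl. destruct (Nat.leb 2 1); simpl; ring.
  replace (Nat.leb 2 (S (S M))) with true by (symmetry; apply Nat.leb_le; lia). ring.
Qed.

Lemma G_0 q : G q 0 = 0.
Proof. unfold G, sum_range. simpl. ring. Qed.

Lemma G_closed q M : G q M = sum1 (fun k => (2 * INR k - 1) * q k) M - (sum1 q M) ^ 2.
Proof.
  induction M. rewrite G_0. simpl. ring.
  rewrite G_step, IHM. cbn [sum1]. rewrite sum1_minus, sum1_const, S_INR. ring.
Qed.

Definition Hs (q : nat -> R) (K : nat) : R :=
  sum1 (fun j => (q j + 2 * sum_range (S j) K q) * (1 - q j)) K.

Lemma Hs_G q K : Hs q K = G q K.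
Proof.
  unfold Hs. induction K. rewrite G_0. reflexivity.
  rewrite G_step, <- IHK. simpl sum1 at 1.
  rewrite (sum1_ext _ (fun j => (q j + 2 * sum_range (S j) K q) * (1 - q j) + 2 * (q (S K) * (1 - q j)))).
  rewrite sum1_plus, sum1_scal, sum1_scal. rewrite sum_range_empty by lia. ring.
  intros j Hj. rewrite sum_range_S. replace (Nat.leb (S j) (S K)) with true by (symmetry; apply Nat.leb_le; lia). ring.
Qed.

Lemma var_id1 (q : nat -> R) n :
  sum_f_R0 (fun k => INR k * ((if Nat.eqb k 0 then 1 else q k) - q (S k))) n = sum1 q n - INR n * q (S n).
Proof.
  induction n. simpl. ring. rewrite tech5, IHn. cbn [Nat.eqb sum1]. rewrite S_INR. ring.
Qed.

Lemma var_id2 (q : nat -> R) n :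
  sum_f_R0 (fun k => INR k ^ 2 * ((if Nat.eqb k 0 then 1 else q k) - q (S k))) n
  = sum1 (fun k => (2 * INR k - 1) * q k) n - INR n ^ 2 * q (S n).
Proof.
  induction n. simpl. ring. rewrite tech5, IHn. cbn [Nat.eqb sum1]. rewrite S_INR. ring.
Qed.

Lemma G_mono_step q M : (forall j, (1 <= j)%nat -> 0 <= q j <= 1) ->
  0 <= G q (S M) - G q M <= q (S M) * (1 + 2 * INR M).
Proof.
  intros H. rewrite G_step.
  assert (A0 : 0 <= sum1 (fun j => 1 - q j) M) by (apply sum1_nonneg; intros j Hj; specialize (H j ltac:(lia)); lra).
  assert (A1 : sum1 (fun j => 1 - q j) M <= INR M).
  { rewrite <- (Rmult_1_r (INR M)), <- sum1_const. apply sum1_le. intros j Hj. specialize (H j ltac:(lia)); lra. }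
  specialize (H (S M) ltac:(lia)). split.
  - assert (0 <= q (S M) * (1 - q (S M))) by (apply Rmult_le_pos; lra).
    assert (0 <= q (S M) * sum1 (fun j => 1 - q j) M) by (apply Rmult_le_pos; lra). lra.
  - assert (q (S M) * (1 - q (S M)) <= q (S M)) by nra.
    assert (q (S M) * sum1 (fun j => 1 - q j) M <= q (S M) * INR M) by (apply Rmult_le_compat_l; lra). lra.
Qed.

Lemma G_mono q a b : (forall j, (1 <= j)%nat -> 0 <= q j <= 1) -> (a <= b)%nat -> G q a <= G q b.
Proof. intros H Hab. induction Hab. lra. assert (T := G_mono_step q m H). lra. Qed.

Lemma G_const q n M : (forall j, (n < j)%nat -> q j = 0) -> (n <= M)%nat -> G q M = G q n.
Proof. intros H Hm. induction Hm as [|m Hm IH]. auto. rewrite G_step, IH, (H (S m)). ring. lia. Qed.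

Definition bgt (a : R) : R -> bool := fun x => if Rlt_dec a x then true else false.
Definition bge (a : R) : R -> bool := fun x => if Rle_dec a x then true else false.

Lemma bgt_iff a x : bgt a x = true <-> a < x.
Proof. unfold bgt; destruct (Rlt_dec a x); split; auto; discriminate. Qed.
Lemma bge_iff a x : bge a x = true <-> a <= x.
Proof. unfold bge; destruct (Rle_dec a x); split; auto; discriminate. Qed.

Lemma borel_bgt a : borel (fun x => bgt a x = true).
Proof. replace (fun x => bgt a x = true) with (fun x => a < x). apply borel_half.
  apply pred_ext; intros x; rewrite bgt_iff; tauto. Qed.

Lemma borel_bge a : borel (fun x => bge a x = true).
Proof.
  replace (fun x => bge a x = true) with
    (fun x => ~ (exists k : nat, (fun k x => ~ (fun x => a - / (INR k + 1) < x) x) k x)).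
  apply borel_compl, borel_union. intros k. apply borel_compl, borel_half.
  apply pred_ext; intros x; rewrite bge_iff; split.
  - intros H. destruct (Rle_dec a x) as [|Hn]; auto. exfalso. apply H.
    destruct (INR_archimed (a - x) 1) as [k Hk]. lra.
    exists k. intros Hlt. pose proof (pos_INR k).
    assert (Hi : / (INR k + 1) * (INR k + 1) = 1) by (field; lra).
    assert (a - x <= / (INR k + 1)) by lra.
    assert ((a - x) * (INR k + 1) <= / (INR k + 1) * (INR k + 1)) by (apply Rmult_le_compat_r; lra).
    nra.
  - intros Hax Hex. destruct Hex as [k Hk]. apply Hk.
    assert (0 < / (INR k + 1)) by (apply Rinv_0_lt_compat; pose proof (pos_INR k); lra). lra.
Qed.

Lemma bge_borel_fix a : forall x, bge a x = true <-> a <= x. Proof. apply bge_iff. Qed.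

Lemma borel_bge_ok a : borel (fun x => bge a x = true).
Proof. apply borel_bge. Qed.

Lemma sum_lt_ext f g n : (forall i, (i < n)%nat -> f i = g i) -> sum_lt f n = sum_lt g n.
Proof. induction n; intros H; simpl; auto. rewrite IHn by (intros; apply H; lia). rewrite H by lia; auto. Qed.

Lemma sum_lt_cnt {Omega} (X : nat -> Omega -> R) (b : R -> bool) (w : Omega) n :
  sum_lt (fun i => if b (X i w) then 1 else 0) n = INR (cnt b X w n).
Proof. induction n; cbn [sum_lt cnt]. auto. rewrite IHn, plus_INR. destruct (b (X n w)); simpl; ring. Qed.

Lemma nShat {Omega} (X : nat -> Omega -> R) n w x : (1 <= n)%nat ->
  INR n * Shat X n w x = INR (cnt (bgt x) X w n).
Proof.
  intros Hn. unfold Shat. rewrite <- Rmult_assoc, Rinv_r, Rmult_1_l. 2:{ apply not_0_INR; lia. }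
  rewrite <- sum_lt_cnt. apply sum_lt_ext. intros i _. unfold bgt. destruct (Rlt_dec x (X i w)); auto.
Qed.

Lemma nShatm {Omega} (X : nat -> Omega -> R) n w x : (1 <= n)%nat ->
  INR n * Shatm X n w x = INR (cnt (bge x) X w n).
Proof.
  intros Hn. unfold Shatm. rewrite <- Rmult_assoc, Rinv_r, Rmult_1_l. 2:{ apply not_0_INR; lia. }
  rewrite <- sum_lt_cnt. apply sum_lt_ext. intros i _. unfold bge. destruct (Rle_dec x (X i w)); auto.
Qed.

Lemma cnt_mono {Omega} (X : nat -> Omega -> R) (b1 b2 : R -> bool) (w : Omega) n :
  (forall x, b1 x = true -> b2 x = true) -> (cnt b1 X w n <= cnt b2 X w n)%nat.
Proof.
  intros H. induction n; simpl; auto. destruct (b1 (X n w)) eqn:E1.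
  rewrite (H _ E1). lia. destruct (b2 (X n w)); lia.
Qed.

Lemma nested_all (eb : nat -> bool) m :
  (forall j, (1 <= j)%nat -> eb (S j) = true -> eb j = true) -> eb m = true ->
  forall j, (1 <= j <= m)%nat -> eb j = true.
Proof.
  intros Hn Hm j Hj. induction m. lia.
  destruct (Nat.eq_dec j (S m)). subst; auto. apply IHm. destruct m. lia. apply Hn; auto. lia. lia.
Qed.

Lemma nested_count (eb : nat -> bool) n :
  (forall j, (1 <= j)%nat -> eb (S j) = true -> eb j = true) ->
  exists g, (g <= n)%nat /\ sum1 (fun j => if eb j then 1 else 0) n = INR g /\
     forall j, (1 <= j <= n)%nat -> (eb j = true <-> (j <= g)%nat).
Proof.
  intros Hn. induction n.
  - exists O. simpl. split; auto. split; auto. intros; lia.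
  - destruct IHn as [g [Hg [Hs Hj]]]. simpl sum1. rewrite Hs.
    destruct (eb (S n)) eqn:E.
    + exists (S n). split; auto. split.
      * assert (g = n). { destruct n. lia. assert (eb (S n) = true) by (apply (nested_all eb (S (S n)) Hn E); lia).
          apply Hj in H; lia. } subst. rewrite S_INR. auto.
      * intros j Hj'. split; intros; try lia. apply (nested_all eb (S n) Hn E); lia.
    + exists g. split. lia. split. ring. intros j Hj'. destruct (Nat.eq_dec j (S n)).
      * subst. rewrite E. split; intros; [discriminate|lia].
      * apply Hj; lia.
Qed.

Lemma div_le_iff a n s : 0 < n -> (a / n <= s <-> a <= n * s).
Proof.
  intros Hn. split; intros H.
  - apply Rmult_le_compat_l with (r := n) in H; [|lra]. replace (n * (a / n)) with a in H by (field; lra). auto.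
  - apply Rmult_le_reg_l with n; auto. replace (n * (a / n)) with a by (field; lra). auto.
Qed.

Definition Ej {Omega} (X : nat -> Omega -> R) n j w : Prop := (j <= cnt (bgt (INR j - 1)) X w n)%nat.

Lemma Ej_nested {Omega} (X : nat -> Omega -> R) n j w : Ej X n (S j) w -> Ej X n j w.
Proof.
  unfold Ej. intros H. assert (cnt (bgt (INR (S j) - 1)) X w n <= cnt (bgt (INR j - 1)) X w n)%nat.
  { apply cnt_mono. intros x. rewrite !bgt_iff. rewrite S_INR. lra. } lia.
Qed.

Lemma Htilde_iff {Omega} (P : (Omega -> Prop) -> R) (X : nat -> Omega -> R) n k w :
  (1 <= n)%nat -> (k <= n)%nat ->
  (Htilde X n w = INR k <-> (Ej X n k w /\ ~ Ej X n (S k) w)).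
Proof.
  intros Hn Hk.
  set (eb := fun j => if Rle_dec (INR j / INR n) (Shat X n w (INR j - 1)) then true else false).
  assert (Heb : forall j, eb j = true <-> Ej X n j w).
  { intros j. unfold eb, Ej.
    destruct (Rle_dec (INR j / INR n) (Shat X n w (INR j - 1))) as [r|r].
    - split; auto. intros _. apply INR_le. rewrite <- nShat by auto.
      apply div_le_iff; auto. apply lt_0_INR; lia.
    - split; [discriminate|]. intros H. exfalso. apply r. apply div_le_iff. apply lt_0_INR; lia.
      rewrite nShat by auto. apply le_INR; auto. }
  assert (HH : Htilde X n w = sum1 (fun j => if eb j then 1 else 0) n).
  { unfold Htilde. apply sum1_ext. intros j _. unfold eb. destruct (Rle_dec _ _); auto. }
  destruct (nested_count eb n) as [g [Hg [Hs Hj]]].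
  { intros j _ H. apply Heb. apply Heb in H. apply Ej_nested; auto. }
  rewrite HH, Hs. split.
  - intros E. apply INR_eq in E. subst g. split.
    + destruct k. unfold Ej; lia. apply Heb, Hj; lia.
    + intros H. destruct (le_lt_dec (S k) n).
      * apply Heb in H. apply Hj in H; lia.
      * unfold Ej in H. pose proof (cnt_le (bgt (INR (S k) - 1)) X w n). lia.
  - intros [H1 H2]. f_equal. apply Nat.le_antisymm.
    + destruct (le_lt_dec g k); auto. exfalso. apply H2. apply Heb, Hj; lia.
    + destruct k. lia. apply Hj. lia. apply Heb; auto.
Qed.

Lemma Ssurv_q {Omega} (P : (Omega -> Prop) -> R) (X : nat -> Omega -> R) a :
  P (fun w => bgt a (X 0%nat w) = true) = Ssurv P X a.
Proof. unfold Ssurv. apply f_equal, pred_ext; intros w. rewrite bgt_iff. lra. Qed.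

Lemma Sminus_q {Omega} (P : (Omega -> Prop) -> R) (X : nat -> Omega -> R) a :
  P (fun w => bge a (X 0%nat w) = true) = Sminus P X a.
Proof. unfold Sminus. apply f_equal, pred_ext; intros w. rewrite bge_iff. lra. Qed.

Lemma ev_Ej {Omega ev P} (X : nat -> Omega -> R) :
  prob_space Omega ev P -> iid_seq Omega ev P X -> forall n j, ev (Ej X n j).
Proof.
  intros HP HI n j. unfold Ej.
  apply (ev_cnt_pred X (bgt (INR j - 1)) HP HI (borel_bgt _) n (fun c => (j <= c)%nat)).
Qed.

Lemma P_Ej {Omega ev P} (X : nat -> Omega -> R) :
  prob_space Omega ev P -> iid_seq Omega ev P X -> forall n j, (1 <= j <= n)%nat ->
  P (Ej X n j) = pjn P X j n.
Proof.
  intros HP HI n j Hj.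
  replace (Ej X n j) with (fun w => Nat.leb j (cnt (bgt (INR j - 1)) X w n) = true).
  2:{ apply pred_ext; intros w. unfold Ej. rewrite Nat.leb_le. tauto. }
  rewrite (binom_sel_all X _ HP HI (borel_bgt _)). rewrite Ssurv_q.
  unfold pjn. replace (Nat.leb j n) with true by (symmetry; apply Nat.leb_le; lia).
  rewrite sum_f_R0_sum1. replace (Nat.leb j 0) with false by (symmetry; apply Nat.leb_gt; lia).
  rewrite Rplus_0_l. unfold sum_range. apply sum1_ext. intros k Hk. destruct (Nat.leb j k); auto.
  unfold bin. replace (Nat.leb k n) with true by (symmetry; apply Nat.leb_le; lia). auto.
Qed.

Lemma pjn_range {Omega ev P} (X : nat -> Omega -> R) :
  prob_space Omega ev P -> iid_seq Omega ev P X -> forall n j, (1 <= j)%nat -> 0 <= pjn P X j n <= 1.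
Proof.
  intros HP HI n j Hj1. destruct (le_lt_dec j n).
  - rewrite <- (P_Ej X HP HI n j) by lia. split. apply (ps_P_ge0 HP). apply (ev_Ej X HP HI).
    apply (ps_P_le1 HP). apply (ev_Ej X HP HI).
  - unfold pjn. replace (Nat.leb j n) with false by (symmetry; apply Nat.leb_gt; lia). lra.
Qed.

Lemma pjn_beyond {Omega} (P : (Omega -> Prop) -> R) X n j : (n < j)%nat -> pjn P X j n = 0.
Proof. intros H. unfold pjn. replace (Nat.leb j n) with false by (symmetry; apply Nat.leb_gt; lia). auto. Qed.

Lemma Var_G {Omega ev P} (X : nat -> Omega -> R) :
  prob_space Omega ev P -> iid_seq Omega ev P X -> forall n, (1 <= n)%nat ->
  VarHtilde P X n = G (fun j => pjn P X j n) n.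
Proof.
  intros HP HI n Hn. set (q := fun j => pjn P X j n).
  assert (HPk : forall k, (k <= n)%nat -> P (fun w => Htilde X n w = INR k) =
             (if Nat.eqb k 0 then 1 else q k) - q (S k)).
  { intros k Hk. replace (fun w => Htilde X n w = INR k) with (fun w => Ej X n k w /\ ~ Ej X n (S k) w).
    2:{ apply pred_ext; intros w. rewrite (Htilde_iff P X n k w Hn Hk). tauto. }
    rewrite (ps_P_diff HP). 2,3: apply (ev_Ej X HP HI). 2:{ intros w; apply Ej_nested. }
    f_equal.
    - destruct k. simpl. rewrite <- (ps_P_true HP). apply f_equal, pred_ext; intros w; unfold Ej; split; auto; lia.
      simpl. apply (P_Ej X HP HI). lia.
    - destruct (Nat.eq_dec k n).
      + subst k. unfold q. rewrite pjn_beyond by lia. rewrite <- (ps_P_false HP). apply f_equal, pred_ext; intros w; unfold Ej; split; [|intros []].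
        pose proof (cnt_le (bgt (INR (S n) - 1)) X w n). lia.
      + apply (P_Ej X HP HI). lia. }
  unfold VarHtilde.
  rewrite (sum_eq _ (fun k => INR k ^ 2 * ((if Nat.eqb k 0 then 1 else q k) - q (S k)))).
  2:{ intros i Hi. rewrite HPk; auto. }
  rewrite (sum_eq (fun k => INR k * P (fun w => Htilde X n w = INR k)) (fun k => INR k * ((if Nat.eqb k 0 then 1 else q k) - q (S k)))).
  2:{ intros i Hi. rewrite HPk; auto. }
  rewrite var_id1, var_id2. replace (q (S n)) with 0 by (unfold q; rewrite pjn_beyond; auto).
  rewrite G_closed. ring.
Qed.

Lemma sum_range_nonneg a b f : (1 <= a)%nat -> (forall k, (1 <= k)%nat -> 0 <= f k) -> 0 <= sum_range a b f.
Proof. intros Ha H. unfold sum_range. apply sum1_nonneg. intros j Hj. destruct (Nat.leb a j). apply H; lia. lra. Qed.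

Lemma sum_range_le_beyond a K n f : (1 <= a)%nat -> (forall k, (1 <= k)%nat -> 0 <= f k) -> (forall k, (n < k)%nat -> f k = 0) ->
  sum_range a K f <= sum_range a n f.
Proof. intros Ha H0 H. unfold sum_range. apply sum1_le_beyond.
  intros j Hj. destruct (Nat.leb a j). apply H0; lia. lra.
  intros j Hj. destruct (Nat.leb a j); auto. Qed.

Lemma part_i {Omega ev P} (X : nat -> Omega -> R) :
  prob_space Omega ev P -> iid_seq Omega ev P X -> forall n K, (1 <= n)%nat ->
  VarHtilde P X n >= sum1 (fun j => rjn P X j n * (1 - pjn P X j n)) K
  /\ sum1 (fun j => rjn P X j n * (1 - pjn P X j n)) K
     >= sum1 (fun j => rtjn P X K j n * (1 - pjn P X j n)) K.
Proof.
  intros HP HI n K Hn.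
  assert (Hp := pjn_range X HP HI n).
  split.
  - rewrite (Var_G X HP HI n Hn). rewrite <- Hs_G. apply Rle_ge.
    apply (sum1_le_beyond (fun j => rjn P X j n * (1 - pjn P X j n)) n K).
    + intros j Hj. apply Rmult_le_pos. unfold rjn. specialize (Hp j Hj).
      assert (0 <= sum_range (S j) n (fun l => pjn P X l n)) by (apply sum_range_nonneg; [lia| exact (fun k Hk => proj1 (pjn_range X HP HI n k Hk))]). lra.
      specialize (Hp j Hj); lra.
    + intros j Hj. unfold rjn. rewrite pjn_beyond by lia. rewrite sum_range_empty by lia. ring.
  - apply Rle_ge. apply sum1_le. intros j Hj. apply Rmult_le_compat_r. specialize (Hp j ltac:(lia)); lra.
    unfold rjn, rtjn. apply Rplus_le_compat_l. apply Rmult_le_compat_l. lra.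
    apply sum_range_le_beyond. lia. exact (fun k Hk => proj1 (pjn_range X HP HI n k Hk)). intros k Hk; apply pjn_beyond; auto.
Qed.

Lemma exp_nat x l : exp (INR l * x) = exp x ^ l.
Proof. induction l. simpl. rewrite Rmult_0_l, exp_0. auto.
  rewrite S_INR, Rmult_plus_distr_r, Rmult_1_l, exp_plus, IHl. simpl. ring. Qed.

Lemma floorn_spec x : 0 <= x -> INR (floorn x) <= x /\ x - 1 < INR (floorn x).
Proof.
  intros Hx. unfold floorn. destruct (base_Int_part x) as [H1 H2].
  assert (Hz : (0 <= Int_part x)%Z).
  { assert (-1 < Int_part x)%Z by (apply lt_IZR; simpl; lra). lia. }
  rewrite INR_IZR_INZ, Z2Nat.id by auto. lra.
Qed.

Lemma floorn_char x m : 0 <= x -> (floorn x = m <-> INR m <= x < INR m + 1).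
Proof.
  intros Hx. destruct (floorn_spec x Hx) as [H1 H2]. split.
  - intros E; subst; lra.
  - intros [H3 H4]. destruct (Nat.lt_total (floorn x) m) as [L|[E|L]]; auto.
    + apply le_INR in L. rewrite S_INR in L. lra.
    + apply le_INR in L. rewrite S_INR in L. lra.
Qed.

Lemma floorn_mono x y : 0 <= x <= y -> (floorn x <= floorn y)%nat.
Proof.
  intros H. destruct (floorn_spec x ltac:(lra)). destruct (floorn_spec y ltac:(lra)).
  destruct (le_lt_dec (floorn x) (floorn y)); auto.
  apply le_INR in l. rewrite S_INR in l. lra.
Qed.

Lemma bernoulli2 x a : 0 <= x -> 1 + INR a * x + INR a * (INR a - 1) / 2 * x ^ 2 <= (1 + x) ^ a.
Proof.
  intros Hx. induction a. simpl. lra.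
  rewrite S_INR. replace ((1+x)^(S a)) with ((1+x)^a * (1+x)) by (simpl; ring).
  assert (HA: 0 <= INR a * (INR a - 1)). { destruct a. simpl; lra. rewrite S_INR; pose proof (pos_INR a); nra. }
  assert (H3 : 0 <= INR a * (INR a - 1) * (x ^ 2 * x)).
  { apply Rmult_le_pos; auto. apply Rmult_le_pos; auto. apply pow2_ge_0. }
  apply Rle_trans with ((1 + INR a * x + INR a * (INR a - 1) / 2 * x ^ 2) * (1 + x)).
  - assert (E : (1 + INR a * x + INR a * (INR a - 1) / 2 * x ^ 2) * (1 + x) -
      (1 + (INR a + 1) * x + (INR a + 1) * (INR a + 1 - 1) / 2 * x ^ 2) = INR a * (INR a - 1) * (x ^ 2 * x) / 2) by (simpl; field).
    lra.
  - apply Rmult_le_compat_r; lra.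
Qed.

Lemma n_pow_cv r : 0 < r < 1 -> forall e, 0 < e -> exists N, forall a, (N <= a)%nat -> INR a * r ^ a < e.
Proof.
  intros Hr e He. set (x := / r - 1).
  assert (Hx : 0 < x). { unfold x. assert (1 < / r). { rewrite <- Rinv_1. apply Rinv_lt_contravar; lra. } lra. }
  destruct (INR_archimed (e * x ^ 2) 4) as [N HN]. { apply Rmult_lt_0_compat; auto. nra. }
  exists (Nat.max N 2). intros a Ha.
  assert (HA : 2 <= INR a). { replace 2 with (INR 2) by (simpl; lra). apply le_INR; lia. }
  assert (HNa : INR N <= INR a) by (apply le_INR; lia).
  assert (Hb := bernoulli2 x a (Rlt_le _ _ Hx)).
  assert (Hpow : (1 + x) ^ a * r ^ a = 1). { rewrite <- Rpow_mult_distr. unfold x. replace ((1 + (/ r - 1)) * r) with 1 by (field; lra). apply pow1. }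
  assert (Hrp : 0 < r ^ a) by (apply pow_lt; lra).
  assert (Hq : INR a ^ 2 * x ^ 2 / 4 <= (1 + x) ^ a).
  { apply Rle_trans with (2 := Hb). assert (0 <= INR a * x) by nra. assert (0 <= x ^ 2) by nra. nra. }
  assert (INR a * r ^ a * (INR a * x ^ 2 / 4) <= 1).
  { replace (INR a * r ^ a * (INR a * x ^ 2 / 4)) with ((INR a ^ 2 * x ^ 2 / 4) * r ^ a) by (unfold Rdiv; ring).
    rewrite <- Hpow. apply Rmult_le_compat_r; lra. }
  assert (e * (INR a * x ^ 2 / 4) > 1).
  { assert (INR a * (e * x ^ 2) > 4). { apply Rlt_le_trans with (INR N * (e * x ^ 2)); auto. apply Rmult_le_compat_r; nra. } nra. }
  assert (0 < INR a * x ^ 2 / 4) by nra.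
  nra.
Qed.

Lemma C_nonneg n k : 0 <= C n k.
Proof. unfold C, Rdiv. apply Rmult_le_pos. apply pos_INR. left. apply Rinv_0_lt_compat.
  apply Rmult_lt_0_compat; apply INR_fact_lt_0. Qed.

Lemma up_tail n l s : (1 <= l)%nat -> 0 <= s <= 1 ->
  sum_range l n (fun y => C n y * s ^ y * (1 - s) ^ (n - y)) <= (1 + s) ^ n / 2 ^ l.
Proof.
  intros Hl Hs. assert (H2l : 0 < 2 ^ l) by (apply pow_lt; lra).
  replace ((1 + s) ^ n) with ((2 * s + (1 - s)) ^ n) by (f_equal; ring).
  rewrite binomial. rewrite sum_f_R0_sum1. unfold sum_range.
  apply Rle_trans with (sum1 (fun k => C n k * (2 * s) ^ k * (1 - s) ^ (n - k) / 2 ^ l) n).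
  - apply sum1_le. intros k Hk. assert (0 <= C n k) by apply C_nonneg.
    assert (0 <= s ^ k) by (apply pow_le; lra). assert (0 <= (1 - s) ^ (n - k)) by (apply pow_le; lra).
    destruct (Nat.leb l k) eqn:E.
    + apply Nat.leb_le in E. rewrite Rpow_mult_distr.
      assert (2 ^ l <= 2 ^ k) by (apply Rle_pow; auto; lra).
      set (A := C n k * s ^ k * (1 - s) ^ (n - k)).
      assert (0 <= A) by (apply Rmult_le_pos; [apply Rmult_le_pos|]; auto).
      replace (C n k * (2 ^ k * s ^ k) * (1 - s) ^ (n - k) / 2 ^ l) with (A + A * ((2 ^ k - 2 ^ l) * / 2 ^ l))
        by (unfold A; field; lra).
      assert (0 <= A * ((2 ^ k - 2 ^ l) * / 2 ^ l)).
      { apply Rmult_le_pos; auto. apply Rmult_le_pos. lra. left; apply Rinv_0_lt_compat; auto. }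
      lra.
    + apply Rmult_le_pos. apply Rmult_le_pos. apply Rmult_le_pos; auto. apply pow_le; lra. auto.
      left; apply Rinv_0_lt_compat; auto.
  - unfold Rdiv. rewrite <- (sum1_ext (fun k => / 2 ^ l * (C n k * (2 * s) ^ k * (1 - s) ^ (n - k)))).
    2:{ intros; ring. } rewrite sum1_scal.
    assert (0 <= C n 0 * (2 * s) ^ 0 * (1 - s) ^ (n - 0)).
    { simpl. rewrite C_n_0. rewrite Rmult_1_r, Rmult_1_l. apply pow_le; lra. }
    assert (0 < / 2 ^ l) by (apply Rinv_0_lt_compat; auto). nra.
Qed.

Lemma low_tail n a q : 0 <= q <= 1 ->
  sum_f_R0 (fun k => if Nat.leb k a then bin n k q else 0) n <= 2 ^ a * (1 - q / 2) ^ n.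
Proof.
  intros Hq. replace (1 - q / 2) with (q / 2 + (1 - q)) by field. rewrite binomial.
  rewrite scal_sum.
  apply sum_Rle. intros k Hk.
  assert (0 <= C n k) by apply C_nonneg.
  assert (0 <= q ^ k) by (apply pow_le; lra). assert (0 <= (1 - q) ^ (n - k)) by (apply pow_le; lra).
  assert (H2 : 0 < 2 ^ k) by (apply pow_lt; lra). assert (0 < 2 ^ a) by (apply pow_lt; lra).
  assert (Hqk : (q / 2) ^ k = q ^ k / 2 ^ k) by (unfold Rdiv; rewrite Rpow_mult_distr, pow_inv; auto).
  rewrite Hqk.
  destruct (Nat.leb k a) eqn:E.
  - apply Nat.leb_le in E. unfold bin. replace (Nat.leb k n) with true by (symmetry; apply Nat.leb_le; lia).
    set (A := C n k * q ^ k * (1 - q) ^ (n - k)).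
    assert (0 <= A) by (apply Rmult_le_pos; [apply Rmult_le_pos|]; auto).
    assert (2 ^ k <= 2 ^ a) by (apply Rle_pow; auto; lra).
    replace (C n k * (q ^ k / 2 ^ k) * (1 - q) ^ (n - k) * 2 ^ a) with (A + A * ((2 ^ a - 2 ^ k) * / 2 ^ k))
        by (unfold A; field; lra).
    assert (0 <= A * ((2 ^ a - 2 ^ k) * / 2 ^ k)).
    { apply Rmult_le_pos; auto. apply Rmult_le_pos. lra. left; apply Rinv_0_lt_compat; auto. }
    lra.
  - apply Rmult_le_pos; [|lra]. apply Rmult_le_pos; auto. apply Rmult_le_pos; auto.
    unfold Rdiv. apply Rmult_le_pos; auto. left; apply Rinv_0_lt_compat; auto.
Qed.

Definition rho : R := exp (1/2) / 2.
Definition sig : R := 2 * exp (- (3/4)).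

Lemma rho_props : 0 < rho < 1.
Proof.
  unfold rho. assert (H := exp_pos (1/2)).
  assert (E : exp (1/2) * exp (1/2) = exp 1) by (rewrite <- exp_plus; f_equal; field).
  assert (exp 1 <= 3) by apply exp_le_3. split. lra. nra.
Qed.

Lemma sig_props : 0 < sig < 1.
Proof.
  unfold sig. assert (H := exp_pos (- (3/4))). split. lra.
  rewrite exp_Ropp.
  assert (E : exp (3/4) = exp (3/32) ^ 8).
  { rewrite <- exp_nat. f_equal. simpl. field. }
  assert (H1 := exp_ineq1_le (3/32)).
  assert (H2 : (1 + 3/32) ^ 8 <= exp (3/32) ^ 8) by (apply pow_incr; lra).
  assert (H3 : 2 < (1 + 3/32) ^ 8) by (simpl; lra).
  assert (H4 : 2 < exp (3/4)) by lra.
  apply Rmult_lt_reg_r with (exp (3/4)). lra. rewrite Rmult_assoc, Rinv_l by lra. lra.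
Qed.

Lemma sum_lt_shift f m : sum_lt f (S m) = f O + sum_lt (fun t => f (S t)) m.
Proof.
  induction m. simpl. ring.
  change (sum_lt f (S (S m))) with (sum_lt f (S m) + f (S m)). rewrite IHm. simpl. ring.
Qed.

Lemma sum_lt_ext' f g n : (forall i, (i < n)%nat -> f i = g i) -> sum_lt f n = sum_lt g n.
Proof. induction n; intros H; simpl; auto. rewrite IHn by (intros; apply H; lia). rewrite H by lia; auto. Qed.

Lemma tsum r a d : 0 < r < 1 ->
  sum_lt (fun i => INR (a + i) * r ^ (a + i)) d <= r ^ a * (INR a / (1 - r) + 1 / (1 - r) ^ 2).
Proof.
  intros Hr. revert a. induction d; intros a.
  - cbn [sum_lt]. assert (0 < r ^ a) by (apply pow_lt; lra). assert (0 <= INR a) by apply pos_INR.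
    assert (0 <= INR a / (1 - r)) by (unfold Rdiv; apply Rmult_le_pos; auto; left; apply Rinv_0_lt_compat; lra).
    assert (0 < 1 / (1 - r) ^ 2) by (unfold Rdiv; rewrite Rmult_1_l; apply Rinv_0_lt_compat; apply pow_lt; lra).
    apply Rmult_le_pos; lra.
  - assert (Hs : sum_lt (fun i => INR (a + i) * r ^ (a + i)) (S d) =
                 INR a * r ^ a + sum_lt (fun i => INR (S a + i) * r ^ (S a + i)) d).
    { rewrite sum_lt_shift. rewrite Nat.add_0_r. f_equal. apply sum_lt_ext'. intros i _.
      rewrite Nat.add_succ_r. reflexivity. }
    rewrite Hs. specialize (IHd (S a)).
    assert (0 < r ^ a) by (apply pow_lt; lra).
    assert (E : r ^ a * (INR a / (1 - r) + 1 / (1 - r) ^ 2) - (INR a * r ^ a + r ^ S a * (INR (S a) / (1 - r) + 1 / (1 - r) ^ 2)) = r ^ a).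
    { rewrite S_INR. simpl. field. lra. }
    lra.
Qed.

Lemma exp_le' x y : x <= y -> exp x <= exp y.
Proof. intros [H|H]. left; apply exp_increasing; auto. subst; lra. Qed.

Lemma Ssurv_le_Sminus {Omega ev P} (X : nat -> Omega -> R) :
  prob_space Omega ev P -> iid_seq Omega ev P X -> forall z x0, z <= x0 -> Ssurv P X x0 <= Sminus P X z.
Proof.
  intros HP HI z x0 Hz. rewrite <- Ssurv_q, <- Sminus_q. apply (ps_P_mono HP).
  apply (iid_ev X HI _ _ (borel_bgt _)). apply (iid_ev X HI _ _ (borel_bge _)).
  intros w. rewrite bgt_iff, bge_iff. lra.
Qed.

Lemma Sminus_anti {Omega ev P} (X : nat -> Omega -> R) :
  prob_space Omega ev P -> iid_seq Omega ev P X -> forall y x, y <= x -> Sminus P X x <= Sminus P X y.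
Proof.
  intros HP HI y x Hz. rewrite <- !Sminus_q. apply (ps_P_mono HP).
  apply (iid_ev X HI _ _ (borel_bge _)). apply (iid_ev X HI _ _ (borel_bge _)).
  intros w. rewrite !bge_iff. lra.
Qed.

Lemma Sminus_range {Omega ev P} (X : nat -> Omega -> R) :
  prob_space Omega ev P -> iid_seq Omega ev P X -> forall y, 0 <= Sminus P X y <= 1.
Proof.
  intros HP HI y. rewrite <- Sminus_q. split. apply (ps_P_ge0 HP). apply (iid_ev X HI _ _ (borel_bge _)).
  apply (ps_P_le1 HP). apply (iid_ev X HI _ _ (borel_bge _)).
Qed.

Lemma Ssurv_range {Omega ev P} (X : nat -> Omega -> R) :
  prob_space Omega ev P -> iid_seq Omega ev P X -> forall y, 0 <= Ssurv P X y <= 1.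
Proof.
  intros HP HI y. rewrite <- Ssurv_q. split. apply (ps_P_ge0 HP). apply (iid_ev X HI _ _ (borel_bgt _)).
  apply (ps_P_le1 HP). apply (iid_ev X HI _ _ (borel_bgt _)).
Qed.

Lemma h_nonneg {Omega ev P} (X : nat -> Omega -> R) :
  prob_space Omega ev P -> iid_seq Omega ev P X -> forall n h, is_lub (hset P X n) h -> 0 <= h.
Proof.
  intros HP HI n h [Hub _]. apply Hub. split. lra.
  assert (0 <= Sminus P X 0) by apply (Sminus_range X HP HI). assert (0 <= INR n) by apply pos_INR.
  apply Rle_ge. apply Rmult_le_pos; auto.
Qed.

Lemma mean_upper {Omega ev P} (X : nat -> Omega -> R) :
  prob_space Omega ev P -> iid_seq Omega ev P X -> forall n h x0, is_lub (hset P X n) h -> h < x0 ->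
  INR n * Ssurv P X x0 <= h.
Proof.
  intros HP HI n h x0 Hl Hx. assert (H0 := h_nonneg X HP HI n h Hl).
  destruct (Rle_dec (INR n * Ssurv P X x0) h) as [|Hn]; auto. exfalso.
  set (z := Rmin (INR n * Ssurv P X x0) x0).
  assert (Hz : h < z) by (unfold z; apply Rmin_glb_lt; lra).
  assert (hset P X n z).
  { split. lra. apply Rle_ge. apply Rle_trans with (INR n * Ssurv P X x0). unfold z; apply Rmin_l.
    apply Rmult_le_compat_l. apply pos_INR. apply (Ssurv_le_Sminus X HP HI). unfold z; apply Rmin_r. }
  assert (z <= h) by (apply (proj1 Hl); auto). lra.
Qed.

Lemma mean_lower {Omega ev P} (X : nat -> Omega -> R) :
  prob_space Omega ev P -> iid_seq Omega ev P X -> forall n h y, is_lub (hset P X n) h -> 0 <= y < h ->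
  h <= INR n * Sminus P X y.
Proof.
  intros HP HI n h y Hl Hy.
  assert (h <= Rmax y (INR n * Sminus P X y)).
  { apply (proj2 Hl). intros x [Hx1 Hx2]. destruct (Rle_dec y x).
    - apply Rle_trans with (INR n * Sminus P X y); [|apply Rmax_r].
      apply Rle_trans with (INR n * Sminus P X x). lra. apply Rmult_le_compat_l. apply pos_INR.
      apply (Sminus_anti X HP HI); auto.
    - apply Rle_trans with y; [lra|apply Rmax_l]. }
  unfold Rmax in H. destruct (Rle_dec y (INR n * Sminus P X y)); lra.
Qed.

Lemma h_infty {Omega ev P} (X : nat -> Omega -> R) (h : nat -> R) :
  prob_space Omega ev P -> iid_seq Omega ev P X ->
  (forall x, 0 <= x -> 0 < Ssurv P X x) ->
  (forall n, (1 <= n)%nat -> is_lub (hset P X n) (h n)) ->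
  forall M, exists N, forall n, (N <= n)%nat -> M <= h n.
Proof.
  intros HP HI HS Hh M. set (M' := Rmax M 0). assert (HM : 0 <= M') by apply Rmax_r.
  assert (Hs := HS M' HM).
  destruct (INR_archimed (Ssurv P X M') M' Hs) as [N0 HN0].
  exists (Nat.max N0 1). intros n Hn.
  apply Rle_trans with M'. apply Rmax_l.
  apply (proj1 (Hh n ltac:(lia))). split; auto. apply Rle_ge.
  apply Rle_trans with (INR n * Ssurv P X M').
  - apply Rle_trans with (INR N0 * Ssurv P X M'). lra. apply Rmult_le_compat_r. lra. apply le_INR; lia.
  - apply Rmult_le_compat_l. apply pos_INR. apply (Ssurv_le_Sminus X HP HI). lra.
Qed.

Lemma tail_p {Omega ev P} (X : nat -> Omega -> R) :
  prob_space Omega ev P -> iid_seq Omega ev P X -> forall n h l, is_lub (hset P X n) h -> 1 <= h ->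
  (floorn (2 * h) < l <= n)%nat -> pjn P X l n <= rho ^ l.
Proof.
  intros HP HI n h l Hl H1 Hln.
  destruct (floorn_spec (2 * h) ltac:(lra)) as [F1 F2].
  assert (HL : INR (S (floorn (2 * h))) <= INR l) by (apply le_INR; lia). rewrite S_INR in HL.
  set (s := Ssurv P X (INR l - 1)).
  assert (Hs : 0 <= s <= 1) by apply (Ssurv_range X HP HI).
  assert (Hm : INR n * s <= h) by (apply (mean_upper X HP HI n h); auto; lra).
  unfold pjn. replace (Nat.leb l n) with true by (symmetry; apply Nat.leb_le; lia).
  apply Rle_trans with ((1 + s) ^ n / 2 ^ l). apply up_tail; auto. lia.
  unfold rho, Rdiv. rewrite Rpow_mult_distr, <- exp_nat. rewrite pow_inv.
  apply Rmult_le_compat_r. left; apply Rinv_0_lt_compat, pow_lt; lra.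
  apply Rle_trans with (exp s ^ n). apply pow_incr. split. lra. apply exp_ineq1_le.
  rewrite <- exp_nat. apply exp_le'. lra.
Qed.

Definition Bnd (K : nat) : R := 3 * (rho ^ S K * (INR (S K) / (1 - rho) + 1 / (1 - rho) ^ 2)).

Lemma Bnd_nonneg K : 0 <= Bnd K.
Proof.
  unfold Bnd. destruct rho_props. assert (0 < rho ^ S K) by (apply pow_lt; lra).
  assert (0 <= INR (S K) / (1 - rho)) by (unfold Rdiv; apply Rmult_le_pos; [apply pos_INR|left; apply Rinv_0_lt_compat; lra]).
  assert (0 < 1 / (1 - rho) ^ 2) by (unfold Rdiv; rewrite Rmult_1_l; apply Rinv_0_lt_compat; apply pow_lt; lra).
  assert (0 <= rho ^ S K * (INR (S K) / (1 - rho) + 1 / (1 - rho) ^ 2)) by (apply Rmult_le_pos; lra). lra.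
Qed.

Lemma Var_tail {Omega ev P} (X : nat -> Omega -> R) :
  prob_space Omega ev P -> iid_seq Omega ev P X -> forall n h, is_lub (hset P X n) h -> 1 <= h ->
  0 <= G (fun j => pjn P X j n) n - G (fun j => pjn P X j n) (floorn (2 * h))
    <= Bnd (floorn (2 * h)).
Proof.
  intros HP HI n h Hl H1. set (K := floorn (2 * h)). set (q := fun j => pjn P X j n).
  assert (Hq : forall j, (1 <= j)%nat -> 0 <= q j <= 1) by (intros; apply (pjn_range X HP HI); auto).
  assert (HB := Bnd_nonneg K).
  destruct (le_lt_dec n K).
  - rewrite (G_const q n K). lra. intros j Hj; apply pjn_beyond; auto. auto.
  - assert (Hd : forall d, (K + d <= n)%nat ->
       0 <= G q (K + d) - G q K <= 3 * sum_lt (fun i => INR (S K + i) * rho ^ (S K + i)) d).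
    { induction d; intros Hd.
      - rewrite Nat.add_0_r. simpl. lra.
      - specialize (IHd ltac:(lia)). rewrite Nat.add_succ_r.
        assert (St := G_mono_step q (K + d) Hq).
        assert (Hp : q (S (K + d)) <= rho ^ (S (K + d))) by (apply (tail_p X HP HI n h); auto; unfold K; lia).
        assert (Hp0 : 0 <= q (S (K + d))) by (apply Hq; lia).
        assert (H3 : q (S (K + d)) * (1 + 2 * INR (K + d)) <= 3 * (INR (S (K + d)) * rho ^ S (K + d))).
        { rewrite S_INR. assert (0 <= INR (K + d)) by apply pos_INR. nra. }
        change (sum_lt (fun i => INR (S K + i) * rho ^ (S K + i)) (S d)) with
          (sum_lt (fun i => INR (S K + i) * rho ^ (S K + i)) d + INR (S K + d) * rho ^ (S K + d)).
        simpl (S K + d)%nat. lra. }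
    specialize (Hd (n - K)%nat ltac:(lia)). replace (K + (n - K))%nat with n in Hd by lia.
    assert (T := tsum rho (S K) (n - K) rho_props). unfold Bnd. lra.
Qed.

Lemma Bnd_cv : forall e, 0 < e -> exists A, forall K, (A <= K)%nat -> Bnd K < e.
Proof.
  intros e He. destruct rho_props as [R0 R1].
  set (c1 := / (1 - rho)). set (c2 := 1 / (1 - rho) ^ 2).
  assert (Hc1 : 0 < c1) by (unfold c1; apply Rinv_0_lt_compat; lra).
  assert (Hc2 : 0 < c2) by (unfold c2, Rdiv; rewrite Rmult_1_l; apply Rinv_0_lt_compat; apply pow_lt; lra).
  destruct (n_pow_cv rho (conj R0 R1) (e / (6 * c1))) as [N1 HN1].
  { apply Rdiv_lt_0_compat; lra. }
  destruct (pow_lt_1_zero rho ltac:(rewrite Rabs_pos_eq; lra) (e / (6 * c2))) as [N2 HN2].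
  { apply Rdiv_lt_0_compat; lra. }
  exists (Nat.max N1 N2). intros K HK.
  specialize (HN1 (S K) ltac:(lia)). specialize (HN2 (S K) ltac:(lia)).
  rewrite Rabs_pos_eq in HN2 by (apply pow_le; lra).
  unfold Bnd. fold c2. unfold Rdiv at 1. fold c1.
  assert (E1 : INR (S K) * rho ^ S K * c1 < e / 6).
  { replace (e / 6) with (e / (6 * c1) * c1) by (field; lra). apply Rmult_lt_compat_r; auto. }
  assert (E2 : rho ^ S K * c2 < e / 6).
  { replace (e / 6) with (e / (6 * c2) * c2) by (field; lra). apply Rmult_lt_compat_r; auto. }
  replace (3 * (rho ^ S K * (INR (S K) * c1 + c2))) with (3 * (INR (S K) * rho ^ S K * c1) + 3 * (rho ^ S K * c2)) by ring.
  lra.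
Qed.

Lemma part_ii_1 {Omega ev P} (X : nat -> Omega -> R) (h : nat -> R) :
  prob_space Omega ev P -> iid_seq Omega ev P X ->
  (forall x, 0 <= x -> 0 < Ssurv P X x) ->
  (forall n, (1 <= n)%nat -> is_lub (hset P X n) (h n)) ->
  forall c N0, 0 < c -> (forall n, (N0 <= n)%nat -> c <= VarHtilde P X n) ->
  forall e, 0 < e -> exists N, forall n, (N <= n)%nat ->
    1 <= h n /\ (1 <= n)%nat /\ c <= VarHtilde P X n /\
    0 <= VarHtilde P X n - G (fun j => pjn P X j n) (floorn (2 * h n)) < e.
Proof.
  intros HP HI HS Hh c N0 Hc HN0 e He.
  destruct (Bnd_cv e He) as [A HA].
  destruct (h_infty X h HP HI HS Hh (Rmax 1 ((INR A + 1) / 2))) as [N1 HN1].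
  exists (Nat.max (Nat.max N0 N1) 1). intros n Hn.
  assert (Hhn := HN1 n ltac:(lia)).
  assert (H1 : 1 <= h n) by (apply Rle_trans with (2 := Hhn); apply Rmax_l).
  assert (H2 : (INR A + 1) / 2 <= h n) by (apply Rle_trans with (2 := Hhn); apply Rmax_r).
  destruct (floorn_spec (2 * h n) ltac:(lra)) as [F1 F2].
  assert (HK : (A <= floorn (2 * h n))%nat). { apply INR_le. lra. }
  assert (T := Var_tail X HP HI n (h n) (Hh n ltac:(lia)) H1).
  rewrite <- (Var_G X HP HI n ltac:(lia)) in T.
  specialize (HA _ HK). repeat split; auto; try lia; try lra. apply HN0; lia.
Qed.

Lemma ps_ev_forall {Omega} {ev} {P : (Omega -> Prop) -> R} :
  prob_space Omega ev P -> forall A : nat -> Omega -> Prop, (forall k, ev (A k)) ->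
      ev (fun w => forall k, A k w).
Proof.
  intros H A HA.
  replace (fun w => forall k, A k w) with (fun w => ~ (exists k, (fun k w => ~ A k w) k w)).
  apply (ps_ev_compl H), (ps_ev_union H). intros k; apply (ps_ev_compl H); auto.
  apply pred_ext; intros w; split.
  - intros Hn k. apply NNPP. intros Hc. apply Hn. exists k; auto.
  - intros Ha [k Hk]. apply Hk, Ha.
Qed.

Lemma Hhatset_iff {Omega} (X : nat -> Omega -> R) n w x : (1 <= n)%nat ->
  (Hhatset X n w x <-> 0 <= x /\ x <= INR (cnt (bge x) X w n)).
Proof. intros Hn. unfold Hhatset. rewrite nShatm by auto. split; intros [H1 H2]; split; lra. Qed.

Lemma Hhat_nonneg {Omega} (X : nat -> Omega -> R) n w H : (1 <= n)%nat ->
  is_lub (Hhatset X n w) H -> 0 <= H.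
Proof. intros Hn Hl. apply (proj1 Hl). apply Hhatset_iff; auto. split. lra. apply pos_INR. Qed.

Lemma Hhat_ge_iff {Omega} (X : nat -> Omega -> R) n w H z : (1 <= n)%nat ->
  is_lub (Hhatset X n w) H ->
  (z <= H <-> forall k : nat, z - / (INR k + 1) < 0 \/ Hhatset X n w (z - / (INR k + 1))).
Proof.
  intros Hn Hl. assert (H0 := Hhat_nonneg X n w H Hn Hl). split.
  - intros Hz k. set (x0 := z - / (INR k + 1)).
    assert (Hd : 0 < / (INR k + 1)) by (apply Rinv_0_lt_compat; pose proof (pos_INR k); lra).
    destruct (Rlt_dec x0 0) as [|Hx0]; [left; auto|right].
    assert (Hex : exists x, Hhatset X n w x /\ x0 < x).
    { apply NNPP. intros Hc. assert (H <= x0).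
      { apply (proj2 Hl). intros x Hx. destruct (Rle_dec x x0); auto. exfalso. apply Hc. exists x; split; auto; lra. }
      unfold x0 in *; lra. }
    destruct Hex as [x [Hx Hlt]]. apply Hhatset_iff in Hx; auto. apply Hhatset_iff; auto.
    split. lra. apply Rle_trans with x. lra. apply Rle_trans with (1 := proj2 Hx).
    apply le_INR. apply cnt_mono. intros t. rewrite !bge_iff. lra.
  - intros Hk. destruct (Rle_dec z H) as [|Hn']; auto. exfalso.
    destruct (INR_archimed (z - H) 1) as [k Hk']. lra.
    destruct (Hk k) as [Hneg|Hin].
    + assert (z - / (INR k + 1) <= H) by lra.
      assert (Hi : / (INR k + 1) * (INR k + 1) = 1) by (field; pose proof (pos_INR k); lra).
      pose proof (pos_INR k).
      assert ((z - H) * (INR k + 1) <= / (INR k + 1) * (INR k + 1)) by (apply Rmult_le_compat_r; lra). nra.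
    + assert (z - / (INR k + 1) <= H) by (apply (proj1 Hl); auto).
      assert (Hi : / (INR k + 1) * (INR k + 1) = 1) by (field; pose proof (pos_INR k); lra).
      pose proof (pos_INR k).
      assert ((z - H) * (INR k + 1) <= / (INR k + 1) * (INR k + 1)) by (apply Rmult_le_compat_r; lra). nra.
Qed.

Lemma ev_Hhat_ge {Omega ev P} (X : nat -> Omega -> R) (Hhat : nat -> Omega -> R) :
  prob_space Omega ev P -> iid_seq Omega ev P X -> forall n, (1 <= n)%nat ->
  (forall w, is_lub (Hhatset X n w) (Hhat n w)) -> forall z, ev (fun w => z <= Hhat n w).
Proof.
  intros HP HI n Hn Hl z.
  replace (fun w => z <= Hhat n w) with
    (fun w => forall k : nat, (fun k w => z - / (INR k + 1) < 0 \/
        (0 <= z - / (INR k + 1) /\ z - / (INR k + 1) <= INR (cnt (bge (z - / (INR k + 1))) X w n))) k w).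
  - apply (ps_ev_forall HP). intros k.
    apply (ev_cnt_pred X _ HP HI (borel_bge _) n (fun c => z - / (INR k + 1) < 0 \/
        (0 <= z - / (INR k + 1) /\ z - / (INR k + 1) <= INR c))).
  - apply pred_ext; intros w. rewrite (Hhat_ge_iff X n w (Hhat n w) z Hn (Hl w)).
    split; intros H k; destruct (H k) as [A|A]; auto; right; apply (Hhatset_iff X n w _ Hn); auto.
Qed.

Lemma ev_floor3 {Omega ev P} (X : nat -> Omega -> R) (Hhat : nat -> Omega -> R) :
  prob_space Omega ev P -> iid_seq Omega ev P X -> forall n, (1 <= n)%nat ->
  (forall w, is_lub (Hhatset X n w) (Hhat n w)) -> forall m, ev (fun w => floorn (3 * Hhat n w) = m).
Proof.
  intros HP HI n Hn Hl m.
  replace (fun w => floorn (3 * Hhat n w) = m) with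
    (fun w => INR m / 3 <= Hhat n w /\ ~ ((INR m + 1) / 3 <= Hhat n w)).
  - apply (ps_ev_and HP). apply (ev_Hhat_ge X Hhat HP HI n Hn Hl).
    apply (ps_ev_compl HP). apply (ev_Hhat_ge X Hhat HP HI n Hn Hl).
  - apply pred_ext; intros w. assert (H0 := Hhat_nonneg X n w _ Hn (Hl w)).
    rewrite floorn_char by lra. split; intros [A B]; split; lra.
Qed.

Lemma part_ii_2 {Omega ev P} (X : nat -> Omega -> R) (h : nat -> R) (Hhat : nat -> Omega -> R) :
  prob_space Omega ev P -> iid_seq Omega ev P X ->
  (forall x, 0 <= x -> 0 < Ssurv P X x) ->
  (forall n, (1 <= n)%nat -> is_lub (hset P X n) (h n)) ->
  (forall n w, (1 <= n)%nat -> is_lub (Hhatset X n w) (Hhat n w)) ->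
  forall c N0, 0 < c -> (forall n, (N0 <= n)%nat -> c <= VarHtilde P X n) ->
  forall eps, 0 < eps ->
  Un_cv (fun n => P (fun w => Rabs (Vn P X (floorn (3 * Hhat n w)) n / VarHtilde P X n - 1) > eps)) 0.
Proof.
  intros HP HI HS Hh Hhh c N0 Hc HN0 eps Heps d Hd.
  destruct (part_ii_1 X h HP HI HS Hh c N0 Hc HN0 (eps * c) ltac:(nra)) as [Na HNa].
  destruct sig_props as [S0 S1].
  destruct (pow_lt_1_zero sig ltac:(rewrite Rabs_pos_eq; lra) d Hd) as [Ns HNs].
  destruct (h_infty X h HP HI HS Hh (Rmax 1 (3 / 2 * (INR Ns + 1)))) as [N1 HN1].
  exists (Nat.max Na N1). intros n Hn.
  destruct (HNa n ltac:(lia)) as (H1 & Hn1 & Hvar & Ht0 & Ht1).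
  assert (Hhn := HN1 n ltac:(lia)).
  assert (H2 : 3 / 2 * (INR Ns + 1) <= h n) by (apply Rle_trans with (2 := Hhn); apply Rmax_r).
  set (y := 2 * h n / 3).
  destruct (floorn_spec y ltac:(unfold y; lra)) as [F1 F2]. set (a := floorn y) in *.
  assert (Ha : (Ns <= a)%nat). { apply INR_le. unfold y in *. lra. }
  set (q := fun j => pjn P X j n).
  set (Var := VarHtilde P X n).
  set (En := fun w => Rabs (Vn P X (floorn (3 * Hhat n w)) n / Var - 1) > eps).
  set (Bd := fun w => Nat.leb (cnt (bge y) X w n) a = true).
  assert (HevE : ev En).
  { replace En with (fun w => exists m, (fun m w => floorn (3 * Hhat n w) = m /\
        Rabs (Vn P X m n / Var - 1) > eps) m w).
    apply (ps_ev_union HP). intros m. apply (ps_ev_const HP).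
    apply (ev_floor3 X Hhat HP HI n Hn1 (fun w => Hhh n w Hn1)).
    apply pred_ext; intros w. unfold En. split. intros [m [E1 E2]]. rewrite E1; auto.
    intros E. exists (floorn (3 * Hhat n w)). auto. }
  assert (HevB : ev Bd) by (apply (ev_cnt_pred X _ HP HI (borel_bge y) n (fun c => Nat.leb c a = true))).
  assert (Hinc : forall w, En w -> Bd w).
  { intros w HE. unfold Bd. apply Nat.leb_le. destruct (le_lt_dec (cnt (bge y) X w n) a) as [|Hlt]; auto.
    exfalso. apply le_INR in Hlt. rewrite S_INR in Hlt.
    assert (Hy : y <= Hhat n w).
    { apply (proj1 (Hhh n w Hn1)). apply Hhatset_iff; auto. split. unfold y; lra. lra. }
    assert (HM : (floorn (2 * h n) <= floorn (3 * Hhat n w))%nat) by (apply floorn_mono; unfold y in Hy; lra).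
    set (M := floorn (3 * Hhat n w)) in *.
    assert (Hq : forall j, (1 <= j)%nat -> 0 <= q j <= 1) by (intros; apply (pjn_range X HP HI); auto).
    assert (G1 : G q (floorn (2 * h n)) <= G q M) by (apply G_mono; auto).
    assert (G2 : G q M <= G q n).
    { destruct (le_lt_dec M n). apply G_mono; auto. rewrite (G_const q n M). lra.
      intros j Hj; apply pjn_beyond; auto. lia. }
    assert (EV : Vn P X M n = G q M) by reflexivity.
    assert (EVar : Var = G q n) by (apply (Var_G X HP HI n Hn1)).
    unfold En in HE. change (floorn (3 * Hhat n w)) with M in HE. rewrite EV in HE.
    assert (HV : 0 < Var) by (unfold Var; lra).
    assert (Hx : Rabs (G q M / Var - 1) = (Var - G q M) / Var).
    { rewrite <- Rabs_Ropp. rewrite Rabs_pos_eq. field. lra.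
      replace (- (G q M / Var - 1)) with ((Var - G q M) / Var) by (field; lra).
      unfold Rdiv; apply Rmult_le_pos; [lra| left; apply Rinv_0_lt_compat; lra]. }
    rewrite Hx in HE.
    assert ((Var - G q M) / Var <= eps).
    { apply Rmult_le_reg_r with Var; auto. unfold Rdiv. rewrite Rmult_assoc, Rinv_l by lra.
      assert (Ht2 : Var - G q (floorn (2 * h n)) < eps * c) by exact Ht1.
      assert (eps * c <= eps * Var) by (apply Rmult_le_compat_l; unfold Var; lra). lra. }
    lra. }
  unfold R_dist. rewrite Rminus_0_r.
  assert (P0 : 0 <= P En) by (apply (ps_P_ge0 HP); auto).
  rewrite Rabs_pos_eq by auto.
  apply Rle_lt_trans with (P Bd). apply (ps_P_mono HP); auto.
  unfold Bd. rewrite (binom_sel_all X _ HP HI (borel_bge y) (fun k => Nat.leb k a) n). rewrite Sminus_q.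
  set (s := Sminus P X y).
  assert (Hs : 0 <= s <= 1) by apply (Sminus_range X HP HI).
  assert (Hm : h n <= INR n * s) by (apply (mean_lower X HP HI n (h n) y (Hh n Hn1)); unfold y; lra).
  apply Rle_lt_trans with (2 ^ a * (1 - s / 2) ^ n). apply low_tail; auto.
  specialize (HNs a Ha). rewrite Rabs_pos_eq in HNs by (apply pow_le; lra).
  apply Rle_lt_trans with (2 := HNs).
  assert (P2 : 0 < 2 ^ a) by (apply pow_lt; lra).
  unfold sig. rewrite Rpow_mult_distr. apply Rmult_le_compat_l. lra.
  apply Rle_trans with (exp (- (s / 2)) ^ n). apply pow_incr. split. lra.
  replace (1 - s / 2) with (1 + - (s / 2)) by ring. apply exp_ineq1_le.
  rewrite <- !exp_nat. apply exp_le'. unfold y in F1. nra.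
Qed.

Theorem theorem4p1
  (Omega : Type) (ev : (Omega -> Prop) -> Prop) (P : (Omega -> Prop) -> R)
  (X : nat -> Omega -> R)
  (h : nat -> R) (Hhat : nat -> Omega -> R) :
  prob_space Omega ev P ->
  iid_seq Omega ev P X ->
  (forall i w, 0 < X i w) ->
  (forall x, 0 <= x -> 0 < Ssurv P X x) ->
  (forall n, (1 <= n)%nat -> is_lub (hset P X n) (h n)) ->
  (forall n w, (1 <= n)%nat -> is_lub (Hhatset X n w) (Hhat n w)) ->
  (* (i) *)
  (forall n, (1 <= n)%nat ->
     VarHtilde P X n
       >= sum1 (fun j => rjn P X j n * (1 - pjn P X j n)) (floorn (2 * h n))
     /\ sum1 (fun j => rjn P X j n * (1 - pjn P X j n)) (floorn (2 * h n))
       >= sum1 (fun j => rtjn P X (floorn (2 * h n)) j n * (1 - pjn P X j n))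
               (floorn (2 * h n)))
  /\
  (* (ii) *)
  ((exists c, 0 < c /\ exists N, forall n, (N <= n)%nat -> c <= VarHtilde P X n) ->
     Un_cv (fun n => VarHtilde P X n /
              sum1 (fun j => rtjn P X (floorn (2 * h n)) j n * (1 - pjn P X j n))
                   (floorn (2 * h n))) 1
     /\
     forall eps, 0 < eps ->
       Un_cv (fun n => P (fun w =>
                Rabs (Vn P X (floorn (3 * Hhat n w)) n / VarHtilde P X n - 1) > eps)) 0).
Proof.
  intros HP HI Hpos HS Hh Hhh. split.
  - intros n Hn. apply (part_i X HP HI n _ Hn).
  - intros [c [Hc [N0 HN0]]]. split.
    + intros e He.
      assert (He2 : 0 < Rmin (c / 2) (e * c / 2)) by (apply Rmin_glb_lt; nra).
      destruct (part_ii_1 X h HP HI HS Hh c N0 Hc HN0 _ He2) as [N HN].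
      exists N. intros n Hn. destruct (HN n Hn) as (H1 & Hn1 & Hv & T0 & T1).
      assert (M1 := Rmin_l (c / 2) (e * c / 2)). assert (M2 := Rmin_r (c / 2) (e * c / 2)).
      set (T := sum1 (fun j => rtjn P X (floorn (2 * h n)) j n * (1 - pjn P X j n)) (floorn (2 * h n))).
      assert (ET : T = G (fun j => pjn P X j n) (floorn (2 * h n))) by (unfold T; rewrite <- Hs_G; reflexivity).
      rewrite <- ET in T0, T1. set (V := VarHtilde P X n) in *.
      assert (HT : c / 2 <= T) by lra.
      assert (HT0 : 0 < T) by lra.
      unfold R_dist. replace (V / T - 1) with ((V - T) / T) by (field; lra).
      rewrite Rabs_pos_eq. 2:{ unfold Rdiv; apply Rmult_le_pos; [lra| left; apply Rinv_0_lt_compat; lra]. }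
      apply Rmult_lt_reg_r with T; auto. unfold Rdiv. rewrite Rmult_assoc, Rinv_l by lra.
      assert (e * c / 2 <= e * T) by nra. lra.
    + intros eps Heps. apply (part_ii_2 X h Hhat HP HI HS Hh Hhh c N0 Hc HN0 eps Heps).
Qed.
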